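(* Let $n$ be an ambient name and $T_1$ a pure mobile-ambient process. Define the binary predicate $\mathcal{P}^{-|open\ n.T_1}(X,Y)$ on pure processes to hold iff there exist a process $P''$ and a name $m\notin fn(X)$ such that $P''\downarrow_m$, $C'[X]\rightsquigarrow P''\rightsquigarrow Y$ and not $Y\downarrow_m$, where $C'[-]=-\mid open\ n.(m[\mathbf{0}]\mid open\ m.T_1)$. Then $\mathcal{P}^{-|open\ n.T_1}$ is stable under $\sim^{BS}_M$, and for all pure processes $P,P'$: $\mathcal{P}^{-|open\ n.T_1}(P,P')$ holds if and only if $P\xrightarrow{-|open\ n.T_1}_{M_I}P'$.
   Context: Mobile ambients (finite, communication-free fragment). Pure processes $P::=\mathbf{0}\mid n[P]\mid M.P\mid(\nu n)P\mid P_1|P_2$, $M::=in\ n\mid out\ n\mid open\ n$; extended processes also allow process variables $X$ and ambients $x[P]$ with name variables $x$ (each variable at most once). Structural congruence $\equiv$: least congruence with $|$ commutative, associative, unit $\mathbf{0}$; $(\nu n)(\nu m)P\equiv(\nu m)(\nu n)P$; $(\nu n)(P|Q)\equiv P|(\nu n)Q$ if $n\notin fn(P)$; $(\nu n)m[P]\equiv m[(\nu n)P]$ if $n\ne m$; $(\nu n)M.P\equiv M.(\nu n)P$ if $n\notin fn(M)$; $\alpha$-conversion. Reduction $\rightsquigarrow$: least relation closed under $\equiv$, $(\nu n)-$, $n[-]$, $-|R$, generated by $n[in\ m.P|Q]|m[R]\rightsquigarrow m[n[P|Q]|R]$, $m[n[out\ m.P|Q]|R]\rightsquigarrow n[P|Q]|m[R]$,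 $open\ n.P|n[Q]\rightsquigarrow P|Q$. Barb $P\downarrow_n$ iff $P\equiv(\nu A)(n[Q]|R)$ with $n\notin A$. Barbed saturated bisimilarity $\sim^{BS}_M$ is the largest symmetric relation $\mathcal{R}$ on pure processes such that if $P\,\mathcal{R}\,Q$ then for every (pure, unary) context $C[-]$ and name $n$: $C[P]\downarrow_n$ implies $C[Q]\downarrow_n$, and $C[P]\rightsquigarrow P'$ implies $C[Q]\rightsquigarrow Q'$ for some $Q'$ with $P'\,\mathcal{R}\,Q'$. A predicate $\mathcal{P}(X,Y)$ is stable under $\mathcal{R}$ if whenever $P\,\mathcal{R}\,Q$ and $\mathcal{P}(P,P')$ there is $Q'$ with $\mathcal{P}(Q,Q')$ and $P'\,\mathcal{R}\,Q'$. The only rule of the transition system $M$ producing labels of shape $-|open\ n.X_1$ is (CoOpen): if $P\equiv(\nu A)(n[P_1]|P_2)$ with $n\notin A$ then $P\xrightarrow{-|open\ n.X_1}(\nu A)(P_1|X_1|P_2)$. $M_I$ instantiates variables: $P\xrightarrow{C[-]}_{M_I}Q$ iff $P\xrightarrow{C_\epsilon[-]}Q_\epsilon$ in $M$ and for some capture-avoiding substitution $\sigma$ of pure processes/names for variables, $Q_\epsilon\sigma\equiv Q$ and $C_\epsilon[-]\sigma=C[-]$. Thus $P\xrightarrow{-|open\ n.T_1}_{M_I}P'$ iff $P\equiv(\nu A)(n[P_1]|P_2)$, $n\notin A$, and $P'\equiv(\nu A)(P_1|T_1|P_2)$ (after $\alpha$-converting $A$ away from $fn(T_1)$). *)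

(* Defs.v *)
From Stdlib Require Import List Arith.
Import ListNotations.

Definition name := nat.

Inductive cap : Type :=
| In_ (n : name) | Out_ (n : name) | Open_ (n : name).

Inductive proc : Type :=
| Zero : proc
| Amb : name -> proc -> proc
| Act : cap -> proc -> proc
| Nu : name -> proc -> proc
| Par : proc -> proc -> proc.

Definition fn_cap (M : cap) : list name :=
  match M with In_ n | Out_ n | Open_ n => [n] end.

Fixpoint fn (P : proc) : list name :=
  match P with
  | Zero => []
  | Amb n Q => n :: fn Q
  | Act M Q => fn_cap M ++ fn Q
  | Nu n Q => remove Nat.eq_dec n (fn Q)
  | Par Q R => fn Q ++ fn R
  end.

Definition swapn (a b x : name) : name :=
  if Nat.eqb x a then b else if Nat.eqb x b then a else x.

Definition swap_cap (a b : name) (M : cap) : cap :=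
  match M with
  | In_ n => In_ (swapn a b n)
  | Out_ n => Out_ (swapn a b n)
  | Open_ n => Open_ (swapn a b n)
  end.

Fixpoint swap (a b : name) (P : proc) : proc :=
  match P with
  | Zero => Zero
  | Amb n Q => Amb (swapn a b n) (swap a b Q)
  | Act M Q => Act (swap_cap a b M) (swap a b Q)
  | Nu n Q => Nu (swapn a b n) (swap a b Q)
  | Par Q R => Par (swap a b Q) (swap a b R)
  end.

Inductive scong : proc -> proc -> Prop :=
| sc_refl P : scong P P
| sc_sym P Q : scong P Q -> scong Q P
| sc_trans P Q R : scong P Q -> scong Q R -> scong P R
| sc_amb n P Q : scong P Q -> scong (Amb n P) (Amb n Q)
| sc_act M P Q : scong P Q -> scong (Act M P) (Act M Q)
| sc_nu n P Q : scong P Q -> scong (Nu n P) (Nu n Q)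
| sc_par P P' Q Q' : scong P P' -> scong Q Q' -> scong (Par P Q) (Par P' Q')
| sc_par_comm P Q : scong (Par P Q) (Par Q P)
| sc_par_assoc P Q R : scong (Par (Par P Q) R) (Par P (Par Q R))
| sc_par_zero P : scong (Par P Zero) P
| sc_nu_nu n m P : scong (Nu n (Nu m P)) (Nu m (Nu n P))
| sc_nu_par n P Q : ~ In n (fn P) -> scong (Nu n (Par P Q)) (Par P (Nu n Q))
| sc_nu_amb n m P : n <> m -> scong (Nu n (Amb m P)) (Amb m (Nu n P))
| sc_nu_act n M P : ~ In n (fn_cap M) -> scong (Nu n (Act M P)) (Act M (Nu n P))
| sc_alpha n m P : ~ In m (fn (Nu n P)) -> scong (Nu n P) (Nu m (swap n m P)).

Inductive red : proc -> proc -> Prop :=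
| r_in n m P Q R :
    red (Par (Amb n (Par (Act (In_ m) P) Q)) (Amb m R))
        (Amb m (Par (Amb n (Par P Q)) R))
| r_out n m P Q R :
    red (Amb m (Par (Amb n (Par (Act (Out_ m) P) Q)) R))
        (Par (Amb n (Par P Q)) (Amb m R))
| r_open n P Q : red (Par (Act (Open_ n) P) (Amb n Q)) (Par P Q)
| r_nu n P Q : red P Q -> red (Nu n P) (Nu n Q)
| r_amb n P Q : red P Q -> red (Amb n P) (Amb n Q)
| r_par P Q R : red P Q -> red (Par P R) (Par Q R)
| r_struct P P0 Q0 Q : scong P P0 -> red P0 Q0 -> scong Q0 Q -> red P Q.

Definition nus (A : list name) (P : proc) : proc := fold_right Nu P A.

Definition barb (P : proc) (n : name) : Prop :=
  exists A Q R, scong P (nus A (Par (Amb n Q) R)) /\ ~ In n A.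

Inductive ctx : Type :=
| Hole : ctx
| CAmb : name -> ctx -> ctx
| CAct : cap -> ctx -> ctx
| CNu : name -> ctx -> ctx
| CParL : ctx -> proc -> ctx
| CParR : proc -> ctx -> ctx.

Fixpoint fill (C : ctx) (P : proc) : proc :=
  match C with
  | Hole => P
  | CAmb n C' => Amb n (fill C' P)
  | CAct M C' => Act M (fill C' P)
  | CNu n C' => Nu n (fill C' P)
  | CParL C' Q => Par (fill C' P) Q
  | CParR Q C' => Par Q (fill C' P)
  end.

(* Barbed saturated bisimilarity: union of all symmetric relations with the
   saturated barbed-bisimulation property (= the largest such relation). *)
Definition bs_progress (R : proc -> proc -> Prop) : Prop :=
  forall P Q, R P Q -> forall C : ctx,
    (forall n, barb (fill C P) n -> barb (fill C Q) n) /\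
    (forall P', red (fill C P) P' -> exists Q', red (fill C Q) Q' /\ R P' Q').

Definition bisimBS (P Q : proc) : Prop :=
  exists R : proc -> proc -> Prop,
    (forall x y, R x y -> R y x) /\ bs_progress R /\ R P Q.

Definition stable (Pr R : proc -> proc -> Prop) : Prop :=
  forall P Q P', R P Q -> Pr P P' -> exists Q', Pr Q Q' /\ R P' Q'.

Definition Cprime (n m : name) (T1 : proc) (X : proc) : proc :=
  Par X (Act (Open_ n) (Par (Amb m Zero) (Act (Open_ m) T1))).

Definition Popen (n : name) (T1 : proc) (X Y : proc) : Prop :=
  exists (P'' : proc) (m : name),
    ~ In m (fn X) /\ barb P'' m /\ red (Cprime n m T1 X) P'' /\ red P'' Y /\
    ~ barb Y m.

(* P --(-|open n.T1)-->_{M_I} P' : instance of rule (CoOpen), with the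
   restricted names A alpha-converted away from fn(T1). *)
Definition trans_coopen (n : name) (T1 : proc) (P P' : proc) : Prop :=
  exists (A : list name) (P1 P2 : proc),
    scong P (nus A (Par (Amb n P1) P2)) /\ ~ In n A /\
    (forall a, In a A -> ~ In a (fn T1)) /\
    scong P' (nus A (Par (Par P1 T1) P2)).

(* Main.v *)
Require Import Defs.
From Stdlib Require Import List Arith Lia Permutation FunctionalExtensionality Setoid Morphisms Classical.
Import ListNotations.

Definition ren_cap (f : name -> name) (M : cap) : cap :=
  match M with In_ n => In_ (f n) | Out_ n => Out_ (f n) | Open_ n => Open_ (f n) end.

Fixpoint ren (f : name -> name) (P : proc) : proc :=
  match P with
  | Zero => Zero
  | Amb n Q => Amb (f n) (ren f Q)
  | Act M Q => Act (ren_cap f M) (ren f Q)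
  | Nu n Q => Nu (f n) (ren f Q)
  | Par Q R => Par (ren f Q) (ren f R)
  end.

Fixpoint names (P : proc) : list name :=
  match P with
  | Zero => []
  | Amb n Q => n :: names Q
  | Act M Q => fn_cap M ++ names Q
  | Nu n Q => n :: names Q
  | Par Q R => names Q ++ names R
  end.

Definition inj (f : name -> name) := forall x y, f x = f y -> x = y.

Lemma swap_cap_ren a b M : swap_cap a b M = ren_cap (swapn a b) M.
Proof. destruct M; reflexivity. Qed.

Lemma swap_ren a b P : swap a b P = ren (swapn a b) P.
Proof. induction P; simpl; rewrite ?swap_cap_ren; congruence. Qed.

Lemma ren_cap_ext f g M : (forall x, In x (fn_cap M) -> f x = g x) -> ren_cap f M = ren_cap g M.
Proof. destruct M; simpl; intros H; rewrite H; auto. Qed.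

Lemma ren_ext f g P : (forall x, In x (names P) -> f x = g x) -> ren f P = ren g P.
Proof.
  induction P; simpl; intros H; try reflexivity.
  - rewrite H by auto. rewrite IHP by auto. reflexivity.
  - rewrite (ren_cap_ext f g) by (intros; apply H; apply in_or_app; auto).
    rewrite IHP by (intros; apply H; apply in_or_app; auto). reflexivity.
  - rewrite H by auto. rewrite IHP by auto. reflexivity.
  - rewrite IHP1, IHP2 by (intros; apply H; apply in_or_app; auto). reflexivity.
Qed.

Lemma ren_comp f g P : ren f (ren g P) = ren (fun x => f (g x)) P.
Proof. induction P; simpl; try destruct c; simpl; congruence. Qed.

Lemma ren_id P : ren (fun x => x) P = P.
Proof. induction P; simpl; try destruct c; simpl; congruence. Qed.

Lemma fn_names P x : In x (fn P) -> In x (names P).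
Proof.
  induction P; simpl; intros H; auto.
  - destruct H; auto.
  - apply in_app_or in H; apply in_or_app; destruct H; auto.
  - apply in_remove in H. right; tauto.
  - apply in_app_or in H; apply in_or_app; destruct H; auto.
Qed.

Lemma fn_cap_ren f M y : In y (fn_cap (ren_cap f M)) <-> exists x, y = f x /\ In x (fn_cap M).
Proof.
  destruct M; simpl; split; intros H.
  all: try (destruct H as [H|[]]; subst; eauto).
  all: destruct H as [x [-> [H|[]]]]; subst; auto.
Qed.

Lemma fn_ren f P y : inj f -> (In y (fn (ren f P)) <-> exists x, y = f x /\ In x (fn P)).
Proof.
  intros Hf; revert y; induction P; intros y; simpl.
  - split; [intros []|intros [x [_ []]]].
  - rewrite IHP. split.
    + intros [H|[x [H1 H2]]]; [exists n; auto| exists x; auto].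
    + intros [x [H1 [H2|H2]]]; [left; congruence| right; eauto].
  - rewrite in_app_iff, fn_cap_ren, IHP. split.
    + intros [[x [H1 H2]]|[x [H1 H2]]]; exists x; rewrite in_app_iff; auto.
    + intros [x [H1 H2]]; rewrite in_app_iff in H2; destruct H2; eauto.
  - split.
    + intros H. apply in_remove in H. destruct H as [H1 H2].
      apply IHP in H1. destruct H1 as [x [H3 H4]]. exists x. split; auto.
      apply in_in_remove; auto. intros ->; auto.
    + intros [x [H1 H2]]. apply in_remove in H2. destruct H2.
      apply in_in_remove. intros E; subst; apply H0; apply Hf; auto.
      apply IHP; eauto.
  - rewrite in_app_iff, IHP1, IHP2. split.
    + intros [[x [H1 H2]]|[x [H1 H2]]]; exists x; rewrite in_app_iff; auto.
    + intros [x [H1 H2]]; rewrite in_app_iff in H2; destruct H2; eauto.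
Qed.

Lemma swapn_inv a b x : swapn a b (swapn a b x) = x.
Proof.
  unfold swapn. destruct (Nat.eqb_spec x a); subst.
  - destruct (Nat.eqb_spec b a); subst; auto. rewrite Nat.eqb_refl; auto.
  - destruct (Nat.eqb_spec x b); subst.
    + rewrite Nat.eqb_refl; auto.
    + destruct (Nat.eqb_spec x a); try congruence. destruct (Nat.eqb_spec x b); congruence.
Qed.

Lemma swapn_inj a b : inj (swapn a b).
Proof. intros x y H. rewrite <- (swapn_inv a b x), <- (swapn_inv a b y), H; auto. Qed.

Lemma fn_swap a b P y : In y (fn (swap a b P)) <-> In (swapn a b y) (fn P).
Proof.
  rewrite swap_ren, fn_ren by apply swapn_inj. split.
  - intros [x [-> H]]. rewrite swapn_inv; auto.
  - intros H. exists (swapn a b y). rewrite swapn_inv; auto.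
Qed.

Lemma swapn_other a b x : x <> a -> x <> b -> swapn a b x = x.
Proof. intros H1 H2. unfold swapn. destruct (Nat.eqb_spec x a); try congruence.
  destruct (Nat.eqb_spec x b); congruence. Qed.
Lemma swapn_l a b : swapn a b a = b.
Proof. unfold swapn. rewrite Nat.eqb_refl. auto. Qed.
Lemma swapn_r a b : swapn a b b = a.
Proof. unfold swapn. destruct (Nat.eqb_spec b a); subst; auto. rewrite Nat.eqb_refl; auto. Qed.

Lemma in_remove_iff (l : list name) x y : In x (remove Nat.eq_dec y l) <-> In x l /\ x <> y.
Proof. split; [apply in_remove| intros []; apply in_in_remove; auto]. Qed.

Lemma fn_scong P Q : scong P Q -> forall x, In x (fn P) <-> In x (fn Q).
Proof.
  induction 1; intros x; cbn [fn]; rewrite ?in_remove_iff, ?in_app_iff; cbn [In];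
    rewrite ?in_remove_iff, ?in_app_iff.
  - tauto.
  - rewrite IHscong; tauto.
  - rewrite IHscong1; auto.
  - rewrite IHscong; tauto.
  - rewrite IHscong; tauto.
  - rewrite IHscong; tauto.
  - rewrite IHscong1, IHscong2. tauto.
  - tauto.
  - tauto.
  - tauto.
  - tauto.
  - split; intros; try tauto. destruct H0 as [H0|[H0 H1]]; auto. split; auto. intros ->; auto.
  - split; intros; try tauto. destruct H0 as [H0|[H0 H1]]; [subst; split; auto|tauto].
  - split; intros; try tauto. destruct H0 as [H0|[H0 H1]]; [split; auto|tauto].
    intros ->; auto.

  - rewrite fn_swap. split; intros H1.
    + destruct H1 as [H1 H2]. assert (x <> m) by (intros ->; apply H; apply in_remove_iff; auto).
      rewrite swapn_other; auto.
    + destruct H1 as [H1 H2].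
      destruct (Nat.eq_dec x n) as [->|Hn].
      * rewrite swapn_l in H1. exfalso. apply H. apply in_remove_iff; auto.
      * rewrite swapn_other in H1 by auto. auto.
Qed.

#[export] Instance scong_equiv : Equivalence scong.
Proof. split; [intro; apply sc_refl | intros ??; apply sc_sym | intros ???; apply sc_trans]. Qed.
#[export] Instance Par_proper : Proper (scong ==> scong ==> scong) Par.
Proof. intros ?? H ?? H'; apply sc_par; auto. Qed.
#[export] Instance Amb_proper n : Proper (scong ==> scong) (Amb n).
Proof. intros ?? H; apply sc_amb; auto. Qed.
#[export] Instance Act_proper M : Proper (scong ==> scong) (Act M).
Proof. intros ?? H; apply sc_act; auto. Qed.
#[export] Instance Nu_proper n : Proper (scong ==> scong) (Nu n).
Proof. intros ?? H; apply sc_nu; auto. Qed.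

Lemma nus_cong A P Q : scong P Q -> scong (nus A P) (nus A Q).
Proof. induction A; simpl; intros H; auto. rewrite IHA; auto. reflexivity. Qed.
#[export] Instance nus_proper A : Proper (scong ==> scong) (nus A).
Proof. intros ?? H; apply nus_cong; auto. Qed.

Lemma nus_app A B P : nus (A ++ B) P = nus A (nus B P).
Proof. unfold nus. apply fold_right_app. Qed.

Lemma fn_nus A P x : In x (fn (nus A P)) <-> In x (fn P) /\ ~ In x A.
Proof.
  induction A; simpl. tauto.
  rewrite in_remove_iff, IHA. split; intros H.
  - destruct H as [[H1 H2] H3]; split; auto. intros [->|?]; auto.
  - destruct H as [H1 H2]. split; auto.
Qed.

Lemma par_comm P Q : scong (Par P Q) (Par Q P). Proof. apply sc_par_comm. Qed.
Lemma par_assoc P Q R : scong (Par (Par P Q) R) (Par P (Par Q R)). Proof. apply sc_par_assoc. Qed.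
Lemma par_zero P : scong (Par P Zero) P. Proof. apply sc_par_zero. Qed.
Lemma par_zero_l P : scong (Par Zero P) P. Proof. rewrite par_comm; apply par_zero. Qed.
Lemma par_swap P Q R : scong (Par P (Par Q R)) (Par Q (Par P R)).
Proof. rewrite <- par_assoc, (par_comm P Q), par_assoc. reflexivity. Qed.

Lemma nus_par_l A X Z : (forall a, In a A -> ~ In a (fn Z)) ->
  scong (nus A (Par Z X)) (Par Z (nus A X)).
Proof.
  induction A; simpl; intros H. reflexivity.
  rewrite IHA by auto. apply sc_nu_par. apply H; auto.
Qed.

Lemma nus_par_r A X Z : (forall a, In a A -> ~ In a (fn Z)) ->
  scong (nus A (Par X Z)) (Par (nus A X) Z).
Proof.
  intros H. rewrite (par_comm X Z), nus_par_l by auto. apply par_comm.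
Qed.

Lemma nus_amb A a P : ~ In a A -> scong (nus A (Amb a P)) (Amb a (nus A P)).
Proof.
  induction A; simpl; intros H. reflexivity.
  rewrite IHA by tauto. apply sc_nu_amb. intros ->; auto.
Qed.

Lemma nus_act A M P : (forall x, In x (fn_cap M) -> ~ In x A) ->
  scong (nus A (Act M P)) (Act M (nus A P)).
Proof.
  induction A; simpl; intros H. reflexivity.
  rewrite IHA by (intros x Hx Hx'; apply (H x); auto).
  apply sc_nu_act. intros Hx; apply (H a); auto.
Qed.

Lemma nus_perm A B P : Permutation A B -> scong (nus A P) (nus B P).
Proof.
  induction 1; simpl; try reflexivity.
  - rewrite IHPermutation; reflexivity.
  - apply sc_nu_nu.
  - etransitivity; eauto.
Qed.

Fixpoint parlist (l : list proc) : proc :=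
  match l with [] => Zero | x :: l => Par x (parlist l) end.

Lemma parlist_app l1 l2 : scong (parlist (l1 ++ l2)) (Par (parlist l1) (parlist l2)).
Proof.
  induction l1; simpl. symmetry; apply par_zero_l.
  rewrite IHl1. symmetry; apply par_assoc.
Qed.

Lemma parlist_perm l l' : Permutation l l' -> scong (parlist l) (parlist l').
Proof.
  induction 1; simpl; try reflexivity.
  - rewrite IHPermutation; reflexivity.
  - apply par_swap.
  - etransitivity; eauto.
Qed.

Lemma ren_parlist f l : ren f (parlist l) = parlist (map (ren f) l).
Proof. induction l; simpl; congruence. Qed.

Lemma fn_parlist l x : In x (fn (parlist l)) <-> exists a, In a l /\ In x (fn a).
Proof.
  induction l; simpl. split; [tauto| intros [a [[] _]]].
  rewrite in_app_iff, IHl. split.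
  - intros [H|[b [H1 H2]]]; eauto.
  - intros [b [[->|H1] H2]]; eauto.
Qed.

Lemma ren_swap_comm f n m P : inj f ->
  ren f (swap n m P) = swap (f n) (f m) (ren f P).
Proof.
  intros Hf. rewrite !swap_ren, !ren_comp. apply ren_ext. intros x _.
  destruct (Nat.eq_dec x n) as [->|H1]. rewrite !swapn_l; auto.
  destruct (Nat.eq_dec x m) as [->|H2]. rewrite !swapn_r; auto.
  rewrite !swapn_other; auto; intros E; apply Hf in E; auto.
Qed.

Lemma ren_scong f P Q : inj f -> scong P Q -> scong (ren f P) (ren f Q).
Proof.
  intros Hf; induction 1; simpl; try (constructor; auto; fail).
  - etransitivity; eauto.
  - apply sc_nu_par. rewrite fn_ren by auto. intros [x [E H1]]. apply Hf in E; subst; auto.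
  - apply sc_nu_act. rewrite fn_cap_ren. intros [x [E H1]]. apply Hf in E; subst; auto.
  - rewrite ren_swap_comm by auto. apply sc_alpha.
    change (Nu (f n) (ren f P)) with (ren f (Nu n P)).
    rewrite fn_ren by auto. intros [x [E H1]]. apply Hf in E; subst; auto.
Qed.

Fixpoint cnt (P : proc) : nat :=
  match P with
  | Zero => 0
  | Amb _ Q | Act _ Q => cnt Q
  | Nu _ Q => S (cnt Q)
  | Par Q R => cnt Q + cnt R
  end.

Lemma cnt_ren f P : cnt (ren f P) = cnt P.
Proof. induction P; simpl; auto. Qed.

Lemma cnt_scong P Q : scong P Q -> cnt P = cnt Q.
Proof.
  induction 1; simpl; try lia. rewrite swap_ren, cnt_ren. auto.
Qed.

Lemma fn_red P Q : red P Q -> forall x, In x (fn Q) -> In x (fn P).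
Proof.
  induction 1 as [| | |n P Q Hr IH|n P Q Hr IH|P Q R Hr IH|P P0 Q0 Q H1 Hr IH H2]; intros x;
    repeat progress (cbn [fn In fn_cap]; rewrite ?in_remove_iff, ?in_app_iff); try tauto.
  - intros [? ?]; split; auto.
  - intros [? | ?]; auto.
  - intros [? | ?]; auto.
  - intros H3. apply (proj2 (fn_scong _ _ H1 x)). apply IH. apply (proj2 (fn_scong _ _ H2 x)). auto.
Qed.

Lemma cnt_red P Q : red P Q -> cnt Q = cnt P.
Proof.
  induction 1; simpl; try lia.
  apply cnt_scong in H. apply cnt_scong in H1. lia.
Qed.

Definition upd (r : name -> name) k v := fun x => if Nat.eqb x k then v else r x.

Fixpoint at_ (r : name -> name) (s : nat) (P : proc) : list proc :=
  match P with
  | Zero => []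
  | Amb n Q => [Amb (r n) (parlist (at_ r s Q))]
  | Act M Q => [Act (ren_cap r M) (parlist (at_ r s Q))]
  | Nu n Q => at_ (upd r n s) (S s) Q
  | Par Q R => at_ r s Q ++ at_ r (s + cnt Q) R
  end.

Lemma upd_eq r k v : upd r k v k = v.
Proof. unfold upd. rewrite Nat.eqb_refl; auto. Qed.
Lemma upd_neq r k v x : x <> k -> upd r k v x = r x.
Proof. unfold upd. intros H. destruct (Nat.eqb_spec x k); congruence. Qed.

Lemma at_ext P : forall r r' s, (forall x, In x (fn P) -> r x = r' x) -> at_ r s P = at_ r' s P.
Proof.
  induction P; intros r r' s H; simpl in *.
  - auto.
  - rewrite H by auto. rewrite (IHP r r') by auto. auto.
  - rewrite (IHP r r') by (intros; apply H; apply in_or_app; auto).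
    rewrite (ren_cap_ext r r') by (intros; apply H; apply in_or_app; auto). auto.
  - apply IHP. intros x Hx. unfold upd. destruct (Nat.eqb_spec x n); auto.
    apply H. apply in_remove_iff; auto.
  - rewrite (IHP1 r r'), (IHP2 r r') by (intros; apply H; apply in_or_app; auto). auto.
Qed.

Lemma ren_cap_comp f g M : ren_cap f (ren_cap g M) = ren_cap (fun x => f (g x)) M.
Proof. destruct M; auto. Qed.

Lemma at_ren P : forall p r r' s s', (forall x, In x (fn P) -> p (r x) = r' x) ->
  (forall t, s <= t < s + cnt P -> p t = t - s + s') ->
  map (ren p) (at_ r s P) = at_ r' s' P.
Proof.
  induction P; intros p r r' s s' H1 H2; simpl in *.
  - auto.
  - rewrite H1 by auto. rewrite ren_parlist, (IHP p r r' s s') by auto. auto.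
  - rewrite ren_parlist, (IHP p r r' s s') by (auto; intros; apply H1; apply in_or_app; auto).
    rewrite ren_cap_comp. rewrite (ren_cap_ext _ r') by (intros; apply H1; apply in_or_app; auto). auto.
  - apply IHP.
    + intros x Hx. unfold upd. destruct (Nat.eqb_spec x n).
      * rewrite H2 by lia. lia.
      * apply H1. apply in_remove_iff; auto.
    + intros t Ht. rewrite H2 by lia. lia.
  - rewrite map_app. rewrite (IHP1 p r r' s s'), (IHP2 p r r' (s + cnt P1) (s' + cnt P1)); auto.
    + intros; apply H1; apply in_or_app; auto.
    + intros t Ht. rewrite H2 by lia. lia.
    + intros; apply H1; apply in_or_app; auto.
    + intros t Ht. rewrite H2 by lia. lia.
Qed.

Lemma cnt_swap a b P : cnt (swap a b P) = cnt P.
Proof. rewrite swap_ren; apply cnt_ren. Qed.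

Lemma at_swap P : forall r s a b, at_ r s (swap a b P) = at_ (fun x => r (swapn a b x)) s P.
Proof.
  induction P; intros r s a b; simpl.
  - auto.
  - rewrite IHP. auto.
  - rewrite IHP. destruct c; auto.
  - rewrite IHP. apply at_ext. intros x _. unfold upd.
    destruct (Nat.eqb_spec (swapn a b x) (swapn a b n)); destruct (Nat.eqb_spec x n); auto.
    + apply swapn_inj in e; congruence.
    + subst; congruence.
  - rewrite IHP1, IHP2, cnt_swap. auto.
Qed.

Lemma names_parlist l x : In x (names (parlist l)) <-> exists a, In a l /\ In x (names a).
Proof.
  induction l; simpl. split; [tauto| intros [a [[] _]]].
  rewrite in_app_iff, IHl. split.
  - intros [H|[b [H1 H2]]]; eauto.
  - intros [b [[->|H1] H2]]; eauto.
Qed.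

Lemma at_names P : forall r s x, In x (names (parlist (at_ r s P))) ->
  (exists y, In y (fn P) /\ x = r y) \/ (s <= x < s + cnt P).
Proof.
  induction P; intros r s x H; simpl in *.
  - destruct H.
  - rewrite app_nil_r in H. destruct H as [H|H]; [left; exists n; auto|].
    destruct (IHP _ _ _ H) as [[y [H1 H2]]|H1]; [left; exists y; auto| right; auto].
  - rewrite app_nil_r, in_app_iff in H. destruct H as [H|H].
    + left. destruct c; simpl in H; destruct H as [H|[]]; subst; exists n; simpl; auto.
    + destruct (IHP _ _ _ H) as [[y [H1 H2]]|H1]; [left; exists y; rewrite in_app_iff; auto| right; auto].
  - destruct (IHP _ _ _ H) as [[y [H1 H2]]|H1].
    + destruct (Nat.eq_dec y n) as [->|Hn].
      * right. rewrite upd_eq in H2. lia.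
      * left. exists y. rewrite upd_neq in H2 by auto. split; auto. apply in_remove_iff; auto.
    + right; lia.
  - apply names_parlist in H. destruct H as [a [Ha Hx]]. apply in_app_or in Ha.
    destruct Ha as [Ha|Ha].
    + destruct (IHP1 r s x) as [[y [H1 H2]]|H1].
      * apply names_parlist; eauto.
      * left; exists y; rewrite in_app_iff; auto.
      * right; lia.
    + destruct (IHP2 r (s + cnt P1) x) as [[y [H1 H2]]|H1].
      * apply names_parlist; eauto.
      * left; exists y; rewrite in_app_iff; auto.
      * right; lia.
Qed.

Lemma at_fn P : forall r s x, In x (fn (parlist (at_ r s P))) ->
  (exists y, In y (fn P) /\ x = r y) \/ (s <= x < s + cnt P).
Proof. intros. apply at_names. apply fn_names. auto. Qed.

Lemma at_fn_in P : forall r s y, In y (fn P) -> In (r y) (fn (parlist (at_ r s P))).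
Proof.
  induction P; intros r s y H; simpl in *.
  - destruct H.
  - rewrite app_nil_r. destruct H as [->|H]; auto.
  - rewrite app_nil_r, in_app_iff. rewrite in_app_iff in H. destruct H as [H|H]; auto.
    left. destruct c; simpl in *; destruct H as [->|[]]; auto.
  - apply in_remove_iff in H. destruct H. rewrite <- (upd_neq r n s y) by auto. auto.
  - apply fn_parlist. rewrite in_app_iff in H. destruct H as [H|H].
    + apply IHP1 with (r := r) (s := s) in H. apply fn_parlist in H.
      destruct H as [a [H1 H2]]. exists a; rewrite in_app_iff; auto.
    + apply IHP2 with (r := r) (s := s + cnt P1) in H. apply fn_parlist in H.
      destruct H as [a [H1 H2]]. exists a; rewrite in_app_iff; auto.
Qed.

Fixpoint updl (r : name -> name) (A : list name) (s : nat) : name -> name :=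
  match A with [] => r | a :: A => updl (upd r a s) A (S s) end.

Lemma at_nus A : forall r s P, at_ r s (nus A P) = at_ (updl r A s) (s + length A) P.
Proof.
  induction A; intros r s P; simpl. rewrite Nat.add_0_r; auto.
  rewrite IHA. replace (S s + length A) with (s + S (length A)) by lia. auto.
Qed.

Lemma updl_notin A : forall r s m, ~ In m A -> updl r A s m = r m.
Proof.
  induction A; intros r s m H; simpl; auto. rewrite IHA by (simpl in H; tauto).
  apply upd_neq. simpl in H. intros ->; auto.
Qed.

Lemma updl_seq k : forall r s, (forall x, r x = x) -> forall x, updl r (seq s k) s x = x.
Proof.
  induction k; intros r s H x; simpl; auto.
  apply IHk. intros y. unfold upd. destruct (Nat.eqb_spec y s); subst; auto.
Qed.

Lemma at_nus_seq s k P : at_ (fun x => x) s (nus (seq s k) P) = at_ (fun x => x) (s + k) P.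
Proof.
  rewrite at_nus, length_seq. apply at_ext. intros x _. apply updl_seq; auto.
Qed.

Fixpoint size (P : proc) : nat :=
  match P with
  | Zero => 1
  | Amb _ Q | Act _ Q | Nu _ Q => S (size Q)
  | Par Q R => S (size Q + size R)
  end.

Lemma size_ren f P : size (ren f P) = size P.
Proof. induction P; simpl; auto. Qed.

Lemma ren_cap_id M : ren_cap (fun x => x) M = M.
Proof. destruct M; auto. Qed.

Definition ID : name -> name := fun x => x.

Lemma real_aux N : forall P, size P <= N -> forall s, (forall x, In x (fn P) -> x < s) ->
  scong P (nus (seq s (cnt P)) (parlist (at_ ID s P))).
Proof.
  induction N; intros P HP s Hs; [destruct P; simpl in HP; lia|].
  destruct P; simpl in *.
  - reflexivity.
  - rewrite par_zero. rewrite nus_amb.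
    + rewrite <- IHN; [reflexivity|lia|auto].
    + intros Hn. apply in_seq in Hn. specialize (Hs n (or_introl eq_refl)). unfold ID in *. lia.
  - rewrite par_zero. fold ID. rewrite ren_cap_id. rewrite nus_act.
    + rewrite <- IHN; [reflexivity|lia|intros; apply Hs; apply in_or_app; auto].
    + intros x Hx Hx'. apply in_seq in Hx'. specialize (Hs x (in_or_app _ _ _ (or_introl Hx))). lia.
  - assert (Hsn : ~ In s (fn (Nu n P))).
    { intros H. apply Hs in H. lia. }
    rewrite (sc_alpha n s P Hsn). apply sc_nu.
    assert (E : at_ (upd ID n s) (S s) P = at_ ID (S s) (swap n s P)).
    { rewrite at_swap. apply at_ext. intros x Hx. unfold ID, upd.
      destruct (Nat.eqb_spec x n).
      - subst. rewrite swapn_l. auto.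
      - rewrite swapn_other; auto. intros ->. apply Hsn. simpl. apply in_remove_iff; auto. }
    rewrite E, <- (cnt_swap n s P). apply IHN.
    + rewrite swap_ren, size_ren. lia.
    + intros x Hx. apply fn_swap in Hx.
      destruct (Nat.eq_dec x n) as [->|Hn].
      * rewrite swapn_l in Hx. destruct (Nat.eq_dec s n) as [->|Hsn']; [lia|].
        exfalso. apply Hsn. simpl. apply in_remove_iff; auto.
      * destruct (Nat.eq_dec x s) as [->|Hxs]; [lia|].
        rewrite swapn_other in Hx by auto.
        assert (x < s) by (apply Hs; apply in_remove_iff; auto). lia.
  - rewrite seq_app, nus_app, parlist_app.
    rewrite nus_par_l.
    + rewrite <- (IHN P2); [|lia|intros x Hx; assert (x < s) by (apply Hs; apply in_or_app; auto); lia].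
      rewrite nus_par_r.
      * rewrite <- (IHN P1); [reflexivity|lia|intros; apply Hs; apply in_or_app; auto].
      * intros a Ha Ha'. apply in_seq in Ha. assert (a < s) by (apply Hs; apply in_or_app; auto). lia.
    + intros a Ha Ha'. apply in_seq in Ha. apply at_fn in Ha'.
      destruct Ha' as [[y [H1 H2]]|H1].
      * unfold ID in H2; subst. assert (y < s) by (apply Hs; apply in_or_app; auto). lia.
      * lia.
Qed.

Lemma real P s : (forall x, In x (fn P) -> x < s) ->
  scong P (nus (seq s (cnt P)) (parlist (at_ ID s P))).
Proof. intros. eapply real_aux; eauto. Qed.

Lemma real0 P s : cnt P = 0 -> scong P (parlist (at_ ID s P)).
Proof.
  revert s; induction P; intros s H; simpl in *; try lia.
  - reflexivity.
  - rewrite par_zero. rewrite <- IHP; auto. reflexivity.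
  - rewrite par_zero. fold ID. rewrite ren_cap_id. rewrite <- IHP; auto. reflexivity.
  - rewrite parlist_app, <- IHP1, <- IHP2; try lia. reflexivity.
Qed.

Lemma fresh_name (l : list nat) : exists d, ~ In d l.
Proof.
  exists (S (list_max l)). intros H.
  assert (list_max l <= list_max l) by lia. apply list_max_le in H0.
  rewrite Forall_forall in H0. apply H0 in H. lia.
Qed.

Lemma swap_core b c R : b <> c -> scong (Nu b (Nu c R)) (Nu b (Nu c (swap b c R))).
Proof.
  intros Hbc. destruct (fresh_name (b :: c :: names R)) as [d Hd].
  simpl in Hd. assert (d <> b /\ d <> c /\ ~ In d (names R)) as [Hdb [Hdc HdR]] by (repeat split; intro; subst; tauto).
  assert (HdfR : ~ In d (fn R)) by (intro; apply HdR; apply fn_names; auto).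
  rewrite (sc_alpha c d R).
  2:{ simpl. rewrite in_remove_iff. tauto. }
  rewrite (sc_alpha b c (Nu d (swap c d R))).
  2:{ simpl. rewrite !in_remove_iff, fn_swap, swapn_l. tauto. }
  simpl. rewrite (swapn_other b c d) by auto.
  rewrite (sc_alpha d b (swap b c (swap c d R))).
  2:{ simpl. rewrite !in_remove_iff, !fn_swap, swapn_l, swapn_l. tauto. }
  rewrite sc_nu_nu.
  assert (E : swap d b (swap b c (swap c d R)) = swap b c R).
  { rewrite !swap_ren, !ren_comp. apply ren_ext. intros x Hx.
    assert (x <> d) by (intros ->; auto).
    destruct (Nat.eq_dec x b) as [->|Hxb].
    - rewrite (swapn_other c d b) by auto. rewrite swapn_l. rewrite (swapn_other d b c) by auto. auto.
    - destruct (Nat.eq_dec x c) as [->|Hxc].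
      + rewrite swapn_l. rewrite (swapn_other b c d) by auto. rewrite swapn_l, swapn_r. auto.
      + rewrite (swapn_other c d x) by auto. rewrite (swapn_other b c x) by auto. rewrite (swapn_other d b x) by auto. auto. }
  rewrite E. reflexivity.
Qed.

Lemma swap_nus b c A Q : (forall x, In x A -> x <> b /\ x <> c) ->
  swap b c (nus A Q) = nus A (swap b c Q).
Proof.
  induction A; simpl; intros H; auto. rewrite IHA by auto.
  rewrite swapn_other by (apply H; auto). auto.
Qed.

Lemma swap_same b Q : swap b b Q = Q.
Proof.
  rewrite swap_ren. rewrite <- (ren_id Q) at 2. apply ren_ext. intros x _.
  unfold swapn. destruct (Nat.eqb_spec x b); auto.
Qed.

Lemma nus_swap A b c Q : NoDup A -> In b A -> In c A ->
  scong (nus A Q) (nus A (swap b c Q)).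
Proof.
  intros HA Hb Hc. destruct (Nat.eq_dec b c) as [<-|Hbc]. rewrite swap_same; reflexivity.
  apply in_split in Hb. destruct Hb as [A1 [A2 ->]].
  assert (Hc' : In c (A1 ++ A2)).
  { apply in_app_or in Hc. apply in_or_app. destruct Hc as [Hc|[Hc|Hc]]; auto. congruence. }
  apply in_split in Hc'. destruct Hc' as [B1 [B2 HB]].
  assert (Hp : Permutation (A1 ++ b :: A2) (b :: c :: (B1 ++ B2))).
  { rewrite <- Permutation_middle. apply perm_skip. rewrite HB. symmetry. apply Permutation_middle. }
  assert (Hnd : NoDup (b :: c :: B1 ++ B2)) by (eapply Permutation_NoDup; eauto).
  inversion Hnd; subst. inversion H2; subst.
  rewrite (nus_perm _ _ Q Hp), (nus_perm _ _ (swap b c Q) Hp). simpl.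
  rewrite swap_core by auto. rewrite swap_nus. reflexivity.
  intros x Hx. split; intros ->. apply H1; simpl; auto. auto.
Qed.

Lemma block_pres (p p' : name -> name) s k :
  (forall x, p' (p x) = x) -> (forall x, p (p' x) = x) ->
  (forall x, x < s \/ s + k <= x -> p x = x) ->
  forall x, s <= x < s + k -> s <= p x < s + k.
Proof.
  intros H1 H2 H3 x Hx.
  destruct (Nat.lt_ge_cases (p x) s) as [Hl|Hl];
  [|destruct (Nat.lt_ge_cases (p x) (s+k)) as [Hl'|Hl']; [lia|]].
  all: assert (E : p (p x) = p x) by (apply H3; lia);
       assert (E2 : p' (p (p x)) = p' (p x)) by (rewrite E; auto);
       rewrite !H1 in E2; lia.
Qed.

Lemma alpha_block k : forall s (p p' : name -> name),
  (forall x, p' (p x) = x) -> (forall x, p (p' x) = x) ->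
  (forall x, x < s \/ s + k <= x -> p x = x) ->
  forall P, scong (nus (seq s k) P) (nus (seq s k) (ren p P)).
Proof.
  induction k; intros s p p' H1 H2 H3 P.
  - simpl. rewrite <- (ren_id P) at 1. rewrite (ren_ext p (fun x => x)). reflexivity.
    intros x _. apply H3. lia.
  - set (b := s + k). set (c := p b).
    assert (Hc : s <= c < s + S k) by (apply (block_pres p p' s (S k)); auto; unfold b; lia).
    set (t := swapn b c).
    set (p1 := fun x => t (p x)). set (p1' := fun x => p' (t x)).
    assert (Hp1b : p1 b = b) by (unfold p1, t; fold c; apply swapn_r).
    assert (IH := IHk s p1 p1').
    assert (E : ren p P = swap b c (ren p1 P)).
    { rewrite swap_ren, ren_comp. apply ren_ext. intros x _. unfold p1, t. rewrite swapn_inv. auto. }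
    rewrite seq_S, !nus_app. simpl. fold b.
    rewrite E.
    assert (F : forall Y, nus (seq s k) (Nu b Y) = nus (seq s k ++ [b]) Y)
      by (intros; rewrite nus_app; reflexivity).
    rewrite !F. rewrite <- (nus_swap _ b c (ren p1 P)).
    + rewrite <- !F. rewrite IH. simpl. rewrite Hp1b. reflexivity.
      * intros x. unfold p1, p1', t. rewrite swapn_inv. auto.
      * intros x. unfold p1, p1', t. rewrite H2. apply swapn_inv.
      * intros x Hx. destruct (Nat.eq_dec x b) as [->|Hxb]; auto.
        unfold p1, t. rewrite H3 by (unfold b in *; lia). apply swapn_other; auto.
        intros ->. unfold b in *; lia.
    + rewrite <- seq_S. apply seq_NoDup.
    + apply in_or_app; simpl; auto.
    + rewrite <- seq_S. apply in_seq. lia.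
Qed.

Definition aeq (x y : proc) : Prop :=
  match x, y with
  | Amb a B, Amb a' B' => a = a' /\ scong B B'
  | Act M B, Act M' B' => M = M' /\ scong B B'
  | _, _ => x = y
  end.

Lemma aeq_refl x : aeq x x.
Proof. destruct x; simpl; auto; split; reflexivity. Qed.
Lemma aeq_sym x y : aeq x y -> aeq y x.
Proof. destruct x, y; simpl; intros H; try congruence; destruct H; split; auto; symmetry; auto. Qed.
Lemma aeq_trans x y z : aeq x y -> aeq y z -> aeq x z.
Proof.
  destruct x, y; simpl; intros H1 H2; try discriminate; subst; auto;
  destruct z; simpl in *; try discriminate; try (destruct H1, H2; split; [congruence|etransitivity; eauto]);
  try (destruct H1; discriminate); try (destruct H2; discriminate); auto.
Qed.
Lemma aeq_scong x y : aeq x y -> scong x y.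
Proof.
  intros H. destruct x; destruct y; simpl in H; try discriminate;
  try (injection H; intros; subst; reflexivity); try reflexivity;
  destruct H as [E H']; subst; rewrite H'; reflexivity.
Qed.
Lemma aeq_ren f x y : inj f -> aeq x y -> aeq (ren f x) (ren f y).
Proof.
  intros Hf H. destruct x; destruct y; simpl in *; try discriminate;
  try (injection H; intros; subst; reflexivity); try reflexivity;
  destruct H as [E H']; subst; split; auto; apply ren_scong; auto.
Qed.

Definition PM (l l' : list proc) : Prop := exists l2, Permutation l l2 /\ Forall2 aeq l2 l'.

Lemma F2_refl l : Forall2 aeq l l.
Proof. induction l; constructor; auto using aeq_refl. Qed.
Lemma F2_sym l l' : Forall2 aeq l l' -> Forall2 aeq l' l.
Proof. induction 1; constructor; auto using aeq_sym. Qed.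
Lemma F2_trans l1 : forall l2 l3, Forall2 aeq l1 l2 -> Forall2 aeq l2 l3 -> Forall2 aeq l1 l3.
Proof.
  induction l1; intros l2 l3 H1 H2; inversion H1; subst; inversion H2; subst; constructor.
  eapply aeq_trans; eauto. eauto.
Qed.

Lemma PM_refl l : PM l l.
Proof. exists l; split; auto using F2_refl. Qed.
Lemma PM_perm l l' : Permutation l l' -> PM l l'.
Proof. exists l'; split; auto using F2_refl. Qed.
Lemma PM_F2 l l' : Forall2 aeq l l' -> PM l l'.
Proof. exists l; split; auto. Qed.
Lemma PM_sym l l' : PM l l' -> PM l' l.
Proof.
  intros [l2 [H1 H2]]. destruct (Permutation_Forall2 (Permutation_sym H1) H2) as [l3 [H3 H4]].
  exists l3; split; auto using F2_sym.
Qed.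
Lemma PM_trans a b c : PM a b -> PM b c -> PM a c.
Proof.
  intros [a2 [H1 H2]] [b2 [H3 H4]].
  apply F2_sym in H2.
  destruct (Permutation_Forall2 H3 H2) as [a3 [H5 H6]].
  exists a3; split. eapply Permutation_trans; eauto.
  eapply F2_trans; eauto. apply F2_sym; auto.
Qed.
Lemma F2_app a b c d : Forall2 aeq a b -> Forall2 aeq c d -> Forall2 aeq (a ++ c) (b ++ d).
Proof. intros; apply Forall2_app; auto. Qed.
Lemma PM_app a b c d : PM a b -> PM c d -> PM (a ++ c) (b ++ d).
Proof.
  intros [a2 [H1 H2]] [c2 [H3 H4]]. exists (a2 ++ c2); split.
  apply Permutation_app; auto. apply F2_app; auto.
Qed.
Lemma PM_map f l l' : inj f -> PM l l' -> PM (map (ren f) l) (map (ren f) l').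
Proof.
  intros Hf [l2 [H1 H2]]. exists (map (ren f) l2); split. apply Permutation_map; auto.
  clear H1. induction H2; simpl; constructor; auto. apply aeq_ren; auto.
Qed.
Lemma F2_parlist l l' : Forall2 aeq l l' -> scong (parlist l) (parlist l').
Proof. induction 1; simpl. reflexivity. rewrite (aeq_scong _ _ H), IHForall2. reflexivity. Qed.
Lemma PM_parlist l l' : PM l l' -> scong (parlist l) (parlist l').
Proof. intros [l2 [H1 H2]]. rewrite (parlist_perm _ _ H1). apply F2_parlist; auto. Qed.

Lemma map_ren_comp f g l : map (ren f) (map (ren g) l) = map (ren (fun x => f (g x))) l.
Proof. rewrite map_map. apply map_ext. intros; apply ren_comp. Qed.

Definition NE (s k : nat) (l l' : list proc) : Prop :=
  exists p p', (forall x, p' (p x) = x) /\ (forall x, p (p' x) = x) /\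
    (forall x, x < s \/ s + k <= x -> p x = x) /\ PM (map (ren p) l) l'.

Lemma inv_inj (p p' : name -> name) : (forall x, p' (p x) = x) -> inj p.
Proof. intros H x y E. rewrite <- (H x), <- (H y), E. auto. Qed.

Lemma map_ren_id' p l : (forall x, p x = x) -> map (ren p) l = l.
Proof.
  intros H. rewrite <- (map_id l) at 2. apply map_ext. intros a.
  rewrite <- (ren_id a) at 2. apply ren_ext; auto.
Qed.

Lemma NE_refl s k l : NE s k l l.
Proof.
  exists (fun x => x), (fun x => x). repeat split; auto.
  rewrite map_ren_id' by auto. apply PM_refl.
Qed.

Lemma NE_eq s k l l' : l = l' -> NE s k l l'.
Proof. intros ->; apply NE_refl. Qed.

Lemma NE_sym s k l l' : NE s k l l' -> NE s k l' l.
Proof.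
  intros [p [p' [H1 [H2 [H3 H4]]]]]. exists p', p. repeat split; auto.
  - intros x Hx. rewrite <- (H3 x Hx) at 1. apply H1.
  - apply PM_sym. apply (PM_map p') in H4; [|apply (inv_inj p' p); auto].
    rewrite map_ren_comp, map_ren_id' in H4 by auto. auto.
Qed.

Lemma NE_trans s k a b c : NE s k a b -> NE s k b c -> NE s k a c.
Proof.
  intros [p [p' [H1 [H2 [H3 H4]]]]] [q [q' [G1 [G2 [G3 G4]]]]].
  exists (fun x => q (p x)), (fun x => p' (q' x)). repeat split.
  - intros x. rewrite G1, H1; auto.
  - intros x. rewrite H2, G2; auto.
  - intros x Hx. rewrite H3, G3; auto.
  - rewrite <- map_ren_comp. eapply PM_trans; [|apply G4].
    apply PM_map; auto. apply (inv_inj q q'); auto.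
Qed.

Lemma NE_weaken s k l l' : NE (S s) k l l' -> NE s (S k) l l'.
Proof.
  intros [p [p' [H1 [H2 [H3 H4]]]]]. exists p, p'. repeat split; auto.
  intros x Hx. apply H3. lia.
Qed.

Lemma inv_fix' (p p' : name -> name) s k : (forall x, p' (p x) = x) ->
  (forall x, x < s \/ s + k <= x -> p x = x) -> (forall x, x < s \/ s + k <= x -> p' x = x).
Proof. intros H1 H2 x Hx. rewrite <- (H2 x Hx) at 1. apply H1. Qed.

Lemma NE_app s k1 k2 l1 l1' l2 l2' : NE s k1 l1 l1' -> NE (s + k1) k2 l2 l2' ->
  (forall a x, In a l1 -> In x (names a) -> x < s + k1) ->
  (forall a x, In a l2 -> In x (names a) -> x < s \/ s + k1 <= x) ->
  NE s (k1 + k2) (l1 ++ l2) (l1' ++ l2').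
Proof.
  intros [p [p' [H1 [H2 [H3 H4]]]]] [q [q' [G1 [G2 [G3 G4]]]]] N1 N2.
  assert (Hp'3 := inv_fix' p p' s k1 H1 H3).
  assert (Hq'3 := inv_fix' q q' (s+k1) k2 G1 G3).
  assert (Bp := block_pres p p' s k1 H1 H2 H3).
  assert (Bp' := block_pres p' p s k1 H2 H1 Hp'3).
  assert (Bq := block_pres q q' (s+k1) k2 G1 G2 G3).
  assert (Bq' := block_pres q' q (s+k1) k2 G2 G1 Hq'3).
  exists (fun x => if x <? s + k1 then p x else q x), (fun x => if x <? s + k1 then p' x else q' x).
  repeat split.
  - intros x. destruct (Nat.ltb_spec x (s+k1)).
    + destruct (Nat.lt_ge_cases x s).
      * rewrite H3 by lia. destruct (Nat.ltb_spec x (s+k1)); try lia. rewrite Hp'3 by lia; auto.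
      * specialize (Bp x ltac:(lia)). destruct (Nat.ltb_spec (p x) (s+k1)); try lia. auto.
    + destruct (Nat.lt_ge_cases x (s + k1 + k2)).
      * specialize (Bq x ltac:(lia)). destruct (Nat.ltb_spec (q x) (s+k1)); try lia. auto.
      * rewrite G3 by lia. destruct (Nat.ltb_spec x (s+k1)); try lia. rewrite Hq'3 by lia; auto.
  - intros x. destruct (Nat.ltb_spec x (s+k1)).
    + destruct (Nat.lt_ge_cases x s).
      * rewrite Hp'3 by lia. destruct (Nat.ltb_spec x (s+k1)); try lia. rewrite H3 by lia; auto.
      * specialize (Bp' x ltac:(lia)). destruct (Nat.ltb_spec (p' x) (s+k1)); try lia. auto.
    + destruct (Nat.lt_ge_cases x (s + k1 + k2)).
      * specialize (Bq' x ltac:(lia)). destruct (Nat.ltb_spec (q' x) (s+k1)); try lia. auto.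
      * rewrite Hq'3 by lia. destruct (Nat.ltb_spec x (s+k1)); try lia. rewrite G3 by lia; auto.
  - intros x Hx. destruct (Nat.ltb_spec x (s+k1)); [apply H3|apply G3]; lia.
  - rewrite map_app. apply PM_app.
    + erewrite map_ext_in; [apply H4|]. intros a Ha. apply ren_ext. intros x Hx.
      specialize (N1 a x Ha Hx). destruct (Nat.ltb_spec x (s+k1)); lia.
    + erewrite map_ext_in; [apply G4|]. intros a Ha. apply ren_ext. intros x Hx.
      specialize (N2 a x Ha Hx). destruct (Nat.ltb_spec x (s+k1)); try lia.
      rewrite H3, G3 by lia. auto.
Qed.

Lemma at_names_el r s P a x : In a (at_ r s P) -> In x (names a) ->
  (exists y, In y (fn P) /\ x = r y) \/ (s <= x < s + cnt P).
Proof. intros H1 H2. apply at_names. apply names_parlist. eauto. Qed.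

Definition rot (s a b x : nat) : nat :=
  if x <? s then x else if x <? s + a then x + b else if x <? s + a + b then x - a else x.

Ltac ltb_cases := repeat match goal with |- context [?a <? ?b] => destruct (Nat.ltb_spec a b) end.

Lemma rot_inv s a b x : rot s a b (rot s b a x) = x.
Proof. unfold rot. ltb_cases; lia. Qed.

Lemma names_cap_fn M x : In x (fn_cap M) -> True. Proof. auto. Qed.

Lemma NE_wrap_amb s k (r : name -> name) a l l' : NE s k l l' -> r a < s ->
  NE s k [Amb (r a) (parlist l)] [Amb (r a) (parlist l')].
Proof.
  intros [p [p' [H1 [H2 [H3 H4]]]]] Ha. exists p, p'. repeat split; auto.
  simpl. rewrite H3 by lia. apply PM_F2. constructor; [|constructor].
  simpl. split; auto. rewrite ren_parlist. apply PM_parlist; auto.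
Qed.

Lemma NE_wrap_act s k (r : name -> name) M l l' : NE s k l l' -> (forall x, In x (fn_cap M) -> r x < s) ->
  NE s k [Act (ren_cap r M) (parlist l)] [Act (ren_cap r M) (parlist l')].
Proof.
  intros [p [p' [H1 [H2 [H3 H4]]]]] Ha. exists p, p'. repeat split; auto.
  simpl. apply PM_F2. constructor; [|constructor].
  simpl. split. rewrite ren_cap_comp. apply ren_cap_ext. intros x Hx. apply H3. left. auto.
  rewrite ren_parlist. apply PM_parlist; auto.
Qed.



Theorem at_scong P Q : scong P Q -> forall r s, (forall x, In x (fn P) -> r x < s) ->
  NE s (cnt P) (at_ r s P) (at_ r s Q).
Proof.
  induction 1; intros r s Hr.
  - apply NE_refl.
  - assert (Hr' : forall x, In x (fn P) -> r x < s) by (intros x Hx; apply Hr; apply (fn_scong _ _ H); auto).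
    apply NE_sym. rewrite <- (cnt_scong _ _ H). auto.
  - assert (Hr' : forall x, In x (fn Q) -> r x < s) by (intros x Hx; apply Hr; apply (fn_scong _ _ H); auto).
    eapply NE_trans. eauto. rewrite (cnt_scong _ _ H). auto.
  - simpl. apply NE_wrap_amb; auto. apply IHscong. intros; apply Hr; simpl; auto. apply Hr; simpl; auto.
  - simpl. apply NE_wrap_act; auto. apply IHscong. intros; apply Hr; simpl; apply in_or_app; auto.
    intros; apply Hr; simpl; apply in_or_app; auto.
  - simpl. apply NE_weaken. apply IHscong. intros x Hx. unfold upd. destruct (Nat.eqb_spec x n). lia.
    assert (r x < s) by (apply Hr; simpl; apply in_remove_iff; auto). lia.
  - simpl. rewrite (cnt_scong _ _ H). apply NE_app.
    + rewrite <- (cnt_scong _ _ H). apply IHscong1. intros; apply Hr; simpl; apply in_or_app; auto.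
    + apply IHscong2. intros x Hx. assert (r x < s) by (apply Hr; simpl; apply in_or_app; auto). lia.
    + intros a x Ha Hx. destruct (at_names_el _ _ _ _ _ Ha Hx) as [[y [H3 H4]]|H3].
      * subst. assert (r y < s) by (apply Hr; simpl; apply in_or_app; auto). lia.
      * rewrite (cnt_scong _ _ H) in H3. lia.
    + intros a x Ha Hx. destruct (at_names_el _ _ _ _ _ Ha Hx) as [[y [H3 H4]]|H3].
      * subst. left. apply Hr; simpl; apply in_or_app; auto.
      * right; lia.
  -
    simpl. exists (rot s (cnt P) (cnt Q)), (rot s (cnt Q) (cnt P)). repeat split.
    + intros; apply rot_inv.
    + intros; apply rot_inv.
    + intros x Hx. unfold rot. ltb_cases; lia.
    + rewrite map_app.
      rewrite (at_ren P _ r r s (s + cnt Q)), (at_ren Q _ r r (s + cnt P) s).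
      * apply PM_perm. apply Permutation_app_comm.
      * intros x Hx. assert (r x < s) by (apply Hr; simpl; apply in_or_app; auto). unfold rot. ltb_cases; lia.
      * intros t Ht. unfold rot. ltb_cases; lia.
      * intros x Hx. assert (r x < s) by (apply Hr; simpl; apply in_or_app; auto). unfold rot. ltb_cases; lia.
      * intros t Ht. unfold rot. ltb_cases; lia.
  - simpl. rewrite <- app_assoc, Nat.add_assoc. apply NE_refl.
  - simpl. rewrite app_nil_r, Nat.add_0_r. apply NE_refl.
  -
    simpl. destruct (Nat.eq_dec n m) as [->|Hnm].
    + apply NE_eq. apply at_ext. intros x _. unfold upd. destruct (Nat.eqb_spec x m); auto.
    + exists (swapn s (S s)), (swapn s (S s)). repeat split.
      * intros; apply swapn_inv.
      * intros; apply swapn_inv.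
      * intros x Hx. apply swapn_other; lia.
      * rewrite (at_ren P _ _ (upd (upd r m s) n (S s)) (S (S s)) (S (S s))). apply PM_refl.
        -- intros x Hx. unfold upd.
           destruct (Nat.eqb_spec x m); destruct (Nat.eqb_spec x n); subst; try congruence.
           ++ apply swapn_r.
           ++ apply swapn_l.
           ++ assert (r x < s) by (apply Hr; simpl; rewrite !in_remove_iff; auto).
              apply swapn_other; lia.
        -- intros t Ht. rewrite swapn_other; lia.
  -
    simpl. exists (rot s 1 (cnt P)), (rot s (cnt P) 1). repeat split.
    + intros; apply rot_inv.
    + intros; apply rot_inv.
    + intros x Hx. unfold rot. ltb_cases; lia.
    + rewrite map_app.
      rewrite (at_ren P _ _ r (S s) s), (at_ren Q _ _ (upd r n (s + cnt P)) (S s + cnt P) (S (s + cnt P))).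
      * apply PM_refl.
      * intros x Hx. unfold upd. destruct (Nat.eqb_spec x n).
        -- unfold rot. ltb_cases; lia.
        -- assert (r x < s) by (apply Hr; simpl; apply in_remove_iff; rewrite in_app_iff; auto).
           unfold rot. ltb_cases; lia.
      * intros t Ht. unfold rot. ltb_cases; lia.
      * intros x Hx. rewrite upd_neq by (intros ->; auto).
        assert (r x < s) by (apply Hr; simpl; apply in_remove_iff; rewrite in_app_iff; split; auto; intros ->; auto).
        unfold rot. ltb_cases; lia.
      * intros t Ht. unfold rot. ltb_cases; lia.
  - simpl. rewrite upd_neq by auto. apply NE_refl.
  - simpl. rewrite (ren_cap_ext (upd r n s) r). apply NE_refl.
    intros x Hx. apply upd_neq. intros ->; auto.
  - simpl. rewrite at_swap. apply NE_eq. apply at_ext. intros x Hx. unfold upd.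
    destruct (Nat.eqb_spec x n).
    + subst. rewrite swapn_l, Nat.eqb_refl. auto.
    + assert (x <> m) by (intros ->; apply H; simpl; apply in_remove_iff; auto).
      rewrite swapn_other by auto. destruct (Nat.eqb_spec x m); congruence.
Qed.

Definition Kind (lo ln : list proc) : Prop :=
  (exists a B B', lo = [Amb a B] /\ ln = [Amb a B']) \/
  (exists a b B1 l B2 B3, lo = [Amb a (parlist (Act (In_ b) B1 :: l)); Amb b B2] /\ ln = [Amb b B3]) \/
  (exists b a B l, lo = [Amb b (parlist (Amb a B :: l))]) \/
  (exists c l1 l2, lo = [Act (Open_ c) (parlist l1); Amb c (parlist l2)] /\ ln = l1 ++ l2).

Lemma Kind_ren f lo ln : Kind lo ln -> Kind (map (ren f) lo) (map (ren f) ln).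
Proof.
  intros [[a [B [B' [-> ->]]]]|[[a [b [B1 [l [B2 [B3 [-> ->]]]]]]]|[[b [a [B [l ->]]]]|[c [l1 [l2 [-> ->]]]]]]].
  - left. simpl. eauto.
  - right; left. simpl. rewrite ren_parlist. simpl. do 6 eexists; eauto.
  - right; right; left. simpl. rewrite ren_parlist. simpl. do 4 eexists; eauto.
  - right; right; right. simpl. rewrite !ren_parlist, map_app. do 3 eexists; eauto.
Qed.

Lemma fn_parlist_app l1 l2 x : In x (fn (parlist (l1 ++ l2))) <-> In x (fn (parlist l1)) \/ In x (fn (parlist l2)).
Proof.
  rewrite (fn_scong _ _ (parlist_app l1 l2)). simpl. rewrite in_app_iff. tauto.
Qed.

Ltac split7 := split; [|split; [|split; [|split; [|split; [|split]]]]].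

Definition RC (U V : proc) (r : name -> name) (s : nat) : Prop :=
  exists p p' lo ln rr, (forall x, p' (p x) = x) /\ (forall x, p (p' x) = x) /\
    (forall x, x < s \/ s + cnt U <= x -> p x = x) /\
    PM (map (ren p) (at_ r s U)) (lo ++ rr) /\ PM (at_ r s V) (ln ++ rr) /\
    (forall x, x < s -> In x (fn (parlist ln)) -> In x (fn (parlist lo))) /\ Kind lo ln.

Lemma RC_base U V r s : Kind (at_ r s U) (at_ r s V) ->
  (forall x, x < s -> In x (fn (parlist (at_ r s V))) -> In x (fn (parlist (at_ r s U)))) -> RC U V r s.
Proof.
  intros HK Hf. exists (fun x => x), (fun x => x), (at_ r s U), (at_ r s V), [].
  split7; auto. rewrite map_ren_id' by auto. rewrite app_nil_r. apply PM_refl.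
  rewrite app_nil_r. apply PM_refl.
Qed.

Theorem red_class U V : red U V -> forall r s, (forall x, In x (fn U) -> r x < s) -> RC U V r s.
Proof.
  induction 1 as [n m P Q R|n m P Q R|n P Q|n P Q Hr IH|n P Q Hr IH|P Q R Hr IH|P P0 Q0 Q H1 Hr IH H2];
    intros r s Hs.
  - apply RC_base.
    + right; left. simpl. do 6 eexists; split; simpl; reflexivity.
    + intros x _. simpl. rewrite !in_app_iff, !fn_parlist_app. simpl. rewrite !in_app_iff. tauto.
  - apply RC_base.
    + right; right; left. simpl. do 4 eexists; simpl; reflexivity.
    + intros x _. simpl. rewrite !in_app_iff, !fn_parlist_app. simpl. rewrite !in_app_iff. tauto.
  - apply RC_base.
    + right; right; right. simpl. do 3 eexists; split; simpl; reflexivity.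
    + intros x _. simpl. rewrite !in_app_iff, !fn_parlist_app. simpl. rewrite !in_app_iff. tauto.
  - simpl. destruct (IH (upd r n s) (S s)) as [p [p' [lo [ln [rr [H1 [H2 [H3 [H4 [H5 [H6 H7]]]]]]]]]]].
    + intros x Hx. unfold upd. destruct (Nat.eqb_spec x n). lia.
      assert (r x < s) by (apply Hs; simpl; apply in_remove_iff; auto). lia.
    + exists p, p', lo, ln, rr. split7; auto.
      all: try (intros x Hx; apply H3; simpl in Hx; lia); try (intros x Hx; apply H6; lia).
  - apply RC_base.
    + left. simpl. do 3 eexists; split; simpl; reflexivity.
    + intros x Hxs. simpl. rewrite !in_app_iff. intros [H|[H|[]]]; auto. right; left.
      apply at_fn in H. destruct H as [[y [H3 ->]]|H3].
      * apply at_fn_in. eapply fn_red; eauto.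
      * lia.
  - unfold RC; simpl. destruct (IH r s) as [p [p' [lo [ln [rr [H1 [H2 [H3 [H4 [H5 [H6 H7]]]]]]]]]]].
    + intros x Hx. apply Hs. simpl. apply in_or_app; auto.
    + exists p, p', lo, ln, (rr ++ at_ r (s + cnt P) R). rewrite (cnt_red _ _ Hr).
      assert (ER : map (ren p) (at_ r (s + cnt P) R) = at_ r (s + cnt P) R).
      { rewrite <- (map_id (at_ r (s + cnt P) R)) at 2. apply map_ext_in. intros a Ha.
        rewrite <- (ren_id a) at 2. apply ren_ext. intros x Hx.
        destruct (at_names_el _ _ _ _ _ Ha Hx) as [[y [G1 G2]]|G1].
        - subst. apply H3. left. apply Hs. simpl. apply in_or_app; auto.
        - apply H3. right; lia. }
      split7; auto.
      all: try (intros x Hx; apply H3; simpl in Hx; lia).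
      all: try (rewrite map_app, ER, app_assoc; apply PM_app; auto; apply PM_refl).
      all: try (rewrite app_assoc; apply PM_app; auto; apply PM_refl).
  - assert (Hs0 : forall x, In x (fn P0) -> r x < s) by (intros x Hx; apply Hs; apply (fn_scong _ _ H1); auto).
    destruct (at_scong _ _ H1 r s Hs) as [q1 [q1' [K1 [K2 [K3 K4]]]]].
    assert (Hs1 : forall x, In x (fn Q0) -> r x < s) by (intros x Hx; apply Hs0; eapply fn_red; eauto).
    destruct (at_scong _ _ H2 r s Hs1) as [q2 [q2' [L1 [L2 [L3 L4]]]]].
    destruct (IH r s Hs0) as [p [p' [lo [ln [rr [G1 [G2 [G3 [G4 [G5 [G6 G7]]]]]]]]]]].
    assert (E1 : cnt Q0 = cnt P) by (rewrite (cnt_red _ _ Hr); symmetry; apply cnt_scong; auto).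
    assert (E0 : cnt P0 = cnt P) by (symmetry; apply cnt_scong; auto).
    exists (fun x => q2 (p (q1 x))), (fun x => q1' (p' (q2' x))),
      (map (ren q2) lo), (map (ren q2) ln), (map (ren q2) rr).
    assert (Iq2 : inj q2) by (apply (inv_inj q2 q2'); auto).
    split7.
    + intros x. rewrite L1, G1, K1. auto.
    + intros x. rewrite K2, G2, L2. auto.
    + intros x Hx. rewrite K3, G3, L3; auto; lia.
    + rewrite <- (map_ren_comp q2 (fun x => p (q1 x))), <- (map_ren_comp p q1), <- map_app. apply PM_map; auto.
      eapply PM_trans; [|apply G4]. apply PM_map; auto. apply (inv_inj p p'); auto.
    + rewrite <- map_app. eapply PM_trans; [apply PM_sym; apply L4|]. apply PM_map; auto.
    + intros x Hx Hin. rewrite <- ren_parlist in Hin |- *.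
      apply fn_ren in Hin; auto. destruct Hin as [y [-> Hy]].
      assert (Ey : y = q2 y).
      { assert (F := inv_fix' q2 q2' s (cnt Q0) L1 L3). rewrite <- (L1 y) at 1. apply F. auto. }
      rewrite <- Ey in *. apply fn_ren; auto. exists y; split; auto.
    + apply Kind_ren; auto.
Qed.

Lemma F2_in_r (l l' : list proc) e : Forall2 aeq l l' -> In e l' -> exists e0, In e0 l /\ aeq e0 e.
Proof.
  induction 1; simpl; intros H1; [destruct H1|]. destruct H1 as [H1|H1]; subst; eauto.
  destruct (IHForall2 H1) as [e0 [H2 H3]]; eauto.
Qed.

Lemma PM_in_r l l' e : PM l l' -> In e l' -> exists e0, In e0 l /\ aeq e0 e.
Proof.
  intros [l2 [H1 H2]] H. destruct (F2_in_r _ _ _ H2 H) as [e0 [H3 H4]].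
  exists e0; split; auto. eapply Permutation_in; [apply Permutation_sym|]; eauto.
Qed.

Lemma PM_in_l l l' e : PM l l' -> In e l -> exists e', In e' l' /\ aeq e e'.
Proof.
  intros H1 H2. apply PM_sym in H1. destruct (PM_in_r _ _ _ H1 H2) as [e0 [H3 H4]].
  exists e0; split; auto. apply aeq_sym; auto.
Qed.

Lemma PM_split l lo rr : PM l (lo ++ rr) ->
  exists lo' l', Permutation l (lo' ++ l') /\ Forall2 aeq lo' lo /\ PM l' rr.
Proof.
  intros [l2 [H1 H2]]. apply Forall2_app_inv_r in H2. destruct H2 as [a [b [H3 [H4 ->]]]].
  exists a, b. split; auto. split; auto. apply PM_F2; auto.
Qed.

Lemma aeq_Amb_l a B w : aeq (Amb a B) w -> exists B', w = Amb a B' /\ scong B B'.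
Proof. destruct w; simpl; intros H; try discriminate. destruct H; subst; eauto. Qed.

Lemma aeq_Amb_r a B w : aeq w (Amb a B) -> exists B', w = Amb a B' /\ scong B' B.
Proof. destruct w; simpl; intros H; try discriminate. destruct H; subst; eauto. Qed.

Lemma aeq_Act_r M B w : aeq w (Act M B) -> exists B', w = Act M B' /\ scong B' B.
Proof. destruct w; simpl; intros H; try discriminate. destruct H; subst; eauto. Qed.

Lemma aeq_Amb_Act a B M B' : ~ aeq (Amb a B) (Act M B').
Proof. simpl. discriminate. Qed.
Lemma aeq_Act_Amb a B M B' : ~ aeq (Act M B') (Amb a B).
Proof. simpl. discriminate. Qed.

Lemma cnt_parlist l : (forall a, In a l -> cnt a = 0) -> cnt (parlist l) = 0.
Proof. induction l; simpl; intros H; auto. rewrite H, IHl; auto. Qed.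

Lemma cnt_at P : forall r s a, In a (at_ r s P) -> cnt a = 0.
Proof.
  induction P; intros r s a H; simpl in H.
  - destruct H.
  - destruct H as [<-|[]]. simpl. apply cnt_parlist. eauto.
  - destruct H as [<-|[]]. simpl. apply cnt_parlist. eauto.
  - eauto.
  - apply in_app_or in H. destruct H; eauto.
Qed.

Lemma cnt_nus A P : cnt (nus A P) = length A + cnt P.
Proof. induction A; simpl; auto. Qed.

Lemma fn_sub_lt U s : (forall x, In x (fn U) -> x < s) -> forall V, red U V -> forall x, In x (fn V) -> x < s.
Proof. intros H V HV x Hx. apply H. eapply fn_red; eauto. Qed.

Lemma barb_atom V m s : barb V m -> m < s -> (forall x, In x (fn V) -> x < s) ->
  exists B, In (Amb m B) (at_ ID s V).
Proof.
  intros [A [Q [R [H1 H2]]]] Hm Hs.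
  destruct (at_scong _ _ H1 ID s Hs) as [q [q' [K1 [K2 [K3 K4]]]]].
  rewrite at_nus in K4. simpl in K4. rewrite updl_notin in K4 by auto. unfold ID at 2 in K4.
  destruct (PM_in_r _ _ _ K4 (or_introl eq_refl)) as [e [He1 He2]].
  apply in_map_iff in He1. destruct He1 as [e0 [<- He0]].
  destruct e0; simpl in He2; try discriminate. destruct He2 as [E _].
  assert (n = m). { rewrite <- (K1 n), E. apply (inv_fix' q q' s (cnt V)); auto. }
  clear K4.
  rewrite <- H. eauto.
Qed.

Lemma atom_barb V m B s : In (Amb m B) (at_ ID s V) -> m < s -> (forall x, In x (fn V) -> x < s) ->
  barb V m.
Proof.
  intros H Hm Hs. apply in_split in H. destruct H as [l1 [l2 E]].
  exists (seq s (cnt V)), B, (parlist (l1 ++ l2)). split.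
  - etransitivity; [apply (real V s Hs)|]. rewrite E. apply nus_cong.
    rewrite (parlist_perm _ _ (Permutation_sym (Permutation_middle l1 l2 (Amb m B)))). reflexivity.
  - intros Hin. apply in_seq in Hin. lia.
Qed.

Lemma barb_fn V m : barb V m -> In m (fn V).
Proof.
  intros [A [Q [R [H1 H2]]]]. apply (fn_scong _ _ H1). apply fn_nus. simpl. split; auto.
Qed.

Lemma Zero_at P : scong Zero P -> at_ ID 0 P = [].
Proof.
  intros H. destruct (at_scong _ _ H ID 0 (fun x (Hx : In x (fn Zero)) => match Hx with end))
    as [q [q' [_ [_ [_ [l2 [H1 H2]]]]]]].
  simpl in H1. apply Permutation_nil in H1. subst. inversion H2; auto.
Qed.

Lemma Zero_not_amb a B l : ~ scong Zero (parlist (Amb a B :: l)).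
Proof. intros H. apply Zero_at in H. simpl in H. discriminate. Qed.
Lemma Zero_not_act M B l : ~ scong Zero (parlist (Act M B :: l)).
Proof. intros H. apply Zero_at in H. simpl in H. discriminate. Qed.

Lemma ren_fix_lt (p p' : name -> name) s k x : (forall x, p' (p x) = x) ->
  (forall x, x < s \/ s + k <= x -> p x = x) -> x < s -> forall y, p y = x -> y = x.
Proof.
  intros H1 H2 Hx y Hy. rewrite <- (H1 y), Hy. apply (inv_fix' p p' s k); auto.
Qed.

Lemma red_nus A X Y : red X Y -> red (nus A X) (nus A Y).
Proof. induction A; simpl; auto. intros H. apply r_nu; auto. Qed.

Lemma F2_in_l (l l' : list proc) e : Forall2 aeq l l' -> In e l -> exists e', In e' l' /\ aeq e e'.
Proof.
  induction 1; simpl; intros H1; [destruct H1|]. destruct H1 as [H1|H1]; subst; eauto.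
  destruct (IHForall2 H1) as [e0 [H2 H3]]; eauto.
Qed.

Lemma lt_max_fn U : forall x, In x (fn U) -> x < S (list_max (fn U)).
Proof.
  intros x Hx. assert (list_max (fn U) <= list_max (fn U)) by lia.
  apply list_max_le in H. rewrite Forall_forall in H. apply H in Hx. lia.
Qed.

Lemma at_U X n m T1 s :
  at_ ID s (Cprime n m T1 X) = at_ ID s X ++
    [Act (Open_ n) (Par (Amb m Zero) (Par (Act (Open_ m) (parlist (at_ ID (s + cnt X) T1))) Zero))].
Proof. unfold Cprime. simpl. rewrite Nat.add_0_r. reflexivity. Qed.

Lemma fnU_facts X n m T1 s : (forall x, In x (fn (Cprime n m T1 X)) -> x < s) ->
  n < s /\ m < s /\ (forall x, In x (fn X) -> x < s) /\ (forall x, In x (fn T1) -> x < s).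
Proof.
  intros H. unfold Cprime in H. simpl in H.
  repeat split.
  - apply H. apply in_or_app; simpl; auto.
  - apply H. apply in_or_app; simpl; auto.
  - intros x Hx; apply H; apply in_or_app; auto.
  - intros x Hx; apply H; apply in_or_app; simpl; auto.
Qed.

Lemma step1 n m T1 X P'' s : ~ In m (fn X) -> (forall x, In x (fn (Cprime n m T1 X)) -> x < s) ->
  barb P'' m -> red (Cprime n m T1 X) P'' ->
  exists B2x l'', Permutation (at_ ID s X) (Amb n B2x :: l'') /\
    scong P'' (nus (seq s (cnt X + cnt T1))
      (Par (Par (Amb m Zero) (Par (Act (Open_ m) (parlist (at_ ID (s + cnt X) T1))) Zero))
           (Par B2x (parlist l'')))).
Proof.
  intros Hm Hs Hb Hr.
  destruct (fnU_facts _ _ _ _ _ Hs) as [hn [hm [hX hT]]].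
  destruct (red_class _ _ Hr ID s Hs) as [p [p' [lo [ln [rr [H1 [H2 [H3 [H4 [H5 [H6 H7]]]]]]]]]]].
  rewrite at_U in H4.
  set (TB := parlist (at_ ID (s + cnt X) T1)) in *.
  set (body := Par (Amb m Zero) (Par (Act (Open_ m) TB) Zero)) in *.
  assert (pm : p m = m) by (apply H3; auto).
  assert (pn : p n = n) by (apply H3; auto).
  assert (Ip : inj p) by (apply (inv_inj p p'); auto).
  assert (FmR : forall e, In e (at_ ID s X) -> ~ In m (fn (ren p e))).
  { intros e He Hme. apply fn_ren in Hme; auto. destruct Hme as [y [Ey Hy]].
    symmetry in Ey. apply (ren_fix_lt p p' s _ m H1 H3 hm) in Ey. subst y.
    assert (Hm2 : In m (fn (parlist (at_ ID s X)))) by (apply fn_parlist; eauto).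
    apply at_fn in Hm2. destruct Hm2 as [[y [Hy1 Hy2]]|Hy1]; [unfold ID in Hy2; subst; auto|lia]. }
  set (oA' := ren p (Act (Open_ n) body)) in *.
  assert (FactOA1 : oA' = Act (Open_ n) (ren p body)) by (unfold oA'; simpl; rewrite pn; reflexivity).
  destruct (PM_split _ _ _ H4) as [lo' [l' [HP [HF HPr]]]].
  rewrite map_app in HP. simpl map at 2 in HP. fold oA' in HP.
  assert (Contra : (forall w, In w lo' -> In w (map (ren p) (at_ ID s X))) -> False).
  { intros Hlo.
    destruct (barb_atom _ _ s Hb hm (fn_sub_lt _ _ Hs _ Hr)) as [B HB].
    destruct (PM_in_l _ _ _ H5 HB) as [e [He1 He2]]. apply aeq_Amb_l in He2. destruct He2 as [B' [-> _]].
    apply in_app_or in He1. destruct He1 as [He1|He1].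
    - assert (Hm1 : In m (fn (parlist ln))) by (apply fn_parlist; exists (Amb m B'); simpl; auto).
      apply H6 in Hm1; auto. apply fn_parlist in Hm1. destruct Hm1 as [w [Hw1 Hw2]].
      destruct (F2_in_r _ _ _ HF Hw1) as [w' [Hw'1 Hw'2]].
      apply Hlo in Hw'1. apply in_map_iff in Hw'1. destruct Hw'1 as [e0 [<- He0]].
      apply (FmR e0 He0). apply (fn_scong _ _ (aeq_scong _ _ Hw'2)). auto.
    - destruct (PM_in_r _ _ _ HPr He1) as [e' [He'1 He'2]]. apply aeq_Amb_r in He'2.
      destruct He'2 as [B'' [-> _]].
      assert (Hin : In (Amb m B'') (map (ren p) (at_ ID s X) ++ [oA'])).
      { eapply Permutation_in; [apply Permutation_sym; eauto|]. apply in_or_app; right; auto. }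
      apply in_app_or in Hin. destruct Hin as [Hin|[Hin|[]]].
      + apply in_map_iff in Hin. destruct Hin as [e0 [E0 He0]]. apply (FmR e0 He0). rewrite E0. simpl; auto.
      + rewrite FactOA1 in Hin; discriminate. }
  assert (HoA : In oA' (lo' ++ l')).
  { eapply Permutation_in; [eauto|]. apply in_or_app; right; simpl; auto. }
  destruct (classic (In oA' l')) as [Hl'|Hl'].
  { exfalso. apply Contra. apply in_split in Hl'. destruct Hl' as [l1 [l2 ->]].
    rewrite app_assoc in HP. apply (Permutation_app_inv _ [] _ _) in HP.
    intros w Hw. rewrite app_nil_r in HP. eapply Permutation_in; [apply Permutation_sym; eauto|].
    apply in_or_app; left; apply in_or_app; auto. }
  assert (HoA' : In oA' lo') by (apply in_app_or in HoA; tauto).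
  destruct H7 as [K|[K|[K|K]]].
  - exfalso. destruct K as [a [B [B' [-> ->]]]].
    destruct (F2_in_l _ _ _ HF HoA') as [w [[<-|[]] Hw]]. rewrite FactOA1 in Hw. apply aeq_Act_Amb in Hw; auto.
  - exfalso. destruct K as [a [b [B1 [l [B2 [B3 [-> ->]]]]]]].
    destruct (F2_in_l _ _ _ HF HoA') as [w [[<-|[<-|[]]] Hw]]; rewrite FactOA1 in Hw; apply aeq_Act_Amb in Hw; auto.
  - exfalso. destruct K as [b [a [B [l ->]]]].
    destruct (F2_in_l _ _ _ HF HoA') as [w [[<-|[]] Hw]]. rewrite FactOA1 in Hw. apply aeq_Act_Amb in Hw; auto.
  - destruct K as [c [l1 [l2 [-> ->]]]].
    inversion HF as [|x' lo1 y1 lo2 Hx' HF2]; subst. inversion HF2 as [|y' lo3 y2 lo4 Hy' HF3]; subst.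
    inversion HF3; subst.
    destruct HoA' as [Ex|[Ex|[]]].
    2:{ exfalso. subst y'. rewrite FactOA1 in Hy'. apply aeq_Act_Amb in Hy'; auto. }
    subst x'.
    rewrite FactOA1 in Hx'. destruct Hx' as [Ec Hbody]. injection Ec as <-.
    assert (HP2 : Permutation (y' :: l') (map (ren p) (at_ ID s X))).
    { rewrite <- (app_nil_r (map _ _)). apply Permutation_cons_app_inv with (a := oA').
      apply Permutation_sym. exact HP. }
    apply Permutation_map_inv in HP2. destruct HP2 as [l3 [E3 HP3]].
    destruct l3 as [|z l'']; simpl in E3; [discriminate|]. injection E3 as Ey El. subst y' l'.
    destruct z; simpl in Hy'; try discriminate. destruct Hy' as [En HB2].
    apply (ren_fix_lt p p' s _ n H1 H3 hn) in En. subst n0.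
    exists z, l''. split; auto.
    etransitivity; [apply (real P'' s (fn_sub_lt _ _ Hs _ Hr))|].
    rewrite (cnt_red _ _ Hr). unfold Cprime. simpl cnt.
    assert (H3' : forall x, x < s \/ s + (cnt X + cnt T1) <= x -> p x = x)
      by (intros x Hx; apply H3; unfold Cprime; simpl; lia).
    symmetry. rewrite (alpha_block _ s p p' H1 H2 H3'). symmetry. apply nus_cong.
    rewrite (PM_parlist _ _ H5), parlist_app, parlist_app.
    rewrite <- Hbody, <- HB2, <- (PM_parlist _ _ HPr).
    change (ren p (Par body (Par z (parlist l'')))) with (Par (ren p body) (Par (ren p z) (ren p (parlist l'')))).
    rewrite ren_parlist, par_assoc. reflexivity.
Qed.

Lemma step2 n m T1 X Y s B2x l'' :
  Permutation (at_ ID s X) (Amb n B2x :: l'') ->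
  (forall x, In x (fn (Cprime n m T1 X)) -> x < s) -> ~ In m (fn X) ->
  red (nus (seq s (cnt X + cnt T1))
      (Par (Par (Amb m Zero) (Par (Act (Open_ m) (parlist (at_ ID (s + cnt X) T1))) Zero))
           (Par B2x (parlist l'')))) Y -> ~ barb Y m ->
  scong Y (nus (seq s (cnt X + cnt T1))
      (Par (Par (parlist (at_ ID (s + cnt X) T1)) Zero) (Par B2x (parlist l'')))).
Proof.
  intros HPX Hs Hm Hr HbY.
  destruct (fnU_facts _ _ _ _ _ Hs) as [hn [hm [hX hT]]].
  set (k := cnt X + cnt T1) in *.
  set (TB := parlist (at_ ID (s + cnt X) T1)) in *.
  set (Z := Par B2x (parlist l'')) in *.
  set (W0 := Par (Par (Amb m Zero) (Par (Act (Open_ m) TB) Zero)) Z) in *.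
  assert (FX : forall x, In x (fn Z) -> In x (fn (parlist (at_ ID s X)))).
  { intros x Hx. apply (fn_scong _ _ (parlist_perm _ _ (Permutation_sym HPX))). simpl.
    unfold Z in Hx. simpl in Hx. rewrite in_app_iff in *. simpl. tauto. }
  assert (AX : forall x, In x (fn Z) -> In x (fn X) \/ s <= x < s + cnt X).
  { intros x Hx. apply FX in Hx. apply at_fn in Hx. destruct Hx as [[y [H1 H2]]|H1]; auto.
    unfold ID in H2; subst; auto. }
  assert (AT : forall x, In x (fn TB) -> In x (fn T1) \/ s + cnt X <= x < s + cnt X + cnt T1).
  { intros x Hx. apply at_fn in Hx. destruct Hx as [[y [H1 H2]]|H1]; auto.
    unfold ID in H2; subst; auto. }
  assert (cTB : cnt TB = 0) by (apply cnt_parlist; intros; eapply cnt_at; eauto).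
  assert (cZ : cnt Z = 0).
  { assert (cX : cnt (parlist (at_ ID s X)) = 0) by (apply cnt_parlist; intros; eapply cnt_at; eauto).
    rewrite (cnt_scong _ _ (parlist_perm _ _ HPX)) in cX. simpl in cX. unfold Z. simpl. lia. }
  assert (cW0 : cnt W0 = 0) by (unfold W0; cbn [cnt]; rewrite cTB, cZ; reflexivity).
  assert (HsU2 : forall x, In x (fn (nus (seq s k) W0)) -> x < s).
  { intros x Hx. apply fn_nus in Hx. destruct Hx as [Hx Hx']. rewrite in_seq in Hx'.
    unfold W0 in Hx. simpl in Hx. rewrite !in_app_iff in Hx. simpl in Hx.
    destruct Hx as [<-|[<-|[[Hx|[]]|Hx]]]; auto.
    - destruct (AT x Hx) as [H|H]; [apply hT; auto|unfold k in Hx'; lia].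
    - assert (Hz : In x (fn Z)) by (unfold Z; simpl; apply in_or_app; exact Hx).
      destruct (AX x Hz) as [H|H]; [apply hX; auto|unfold k in Hx'; lia]. }
  destruct (red_class _ _ Hr ID s HsU2) as [p [p' [lo [ln [rr [H1 [H2 [H3 [H4 [H5 [H6 H7]]]]]]]]]]].
  rewrite at_nus_seq in H4. fold ID in H4.
  assert (EW : exists t1 t2, at_ ID (s + k) W0 =
     Amb m Zero :: Act (Open_ m) (parlist (at_ ID t1 TB)) :: at_ ID t2 Z).
  { unfold W0. simpl. do 2 eexists. reflexivity. }
  destruct EW as [t1 [t2 EW]]. rewrite EW in H4.
  assert (pm : p m = m) by (apply H3; auto).
  assert (Ip : inj p) by (apply (inv_inj p p'); auto).
  assert (HsY : forall x, In x (fn Y) -> x < s) by (apply (fn_sub_lt _ _ HsU2 _ Hr)).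
  assert (FmR : forall e, In e (at_ ID t2 Z) -> ~ In m (fn (ren p e))).
  { intros e He Hme. apply fn_ren in Hme; auto. destruct Hme as [y [Ey Hy]].
    symmetry in Ey. apply (ren_fix_lt p p' s _ m H1 H3 hm) in Ey. subst y.
    assert (Hm2 : In m (fn (parlist (at_ ID t2 Z)))) by (apply fn_parlist; eauto).
    apply at_fn in Hm2. destruct Hm2 as [[y [Hy1 Hy2]]|Hy1]; [|lia].
    unfold ID in Hy2; subst. destruct (AX _ Hy1) as [H|H]; auto; lia. }
  assert (BarbY : forall B, In (Amb m B) (ln ++ rr) -> False).
  { intros B HB. destruct (PM_in_r _ _ _ H5 HB) as [e0 [He1 He2]].
    apply aeq_Amb_r in He2. destruct He2 as [B' [-> _]].
    apply HbY. eapply atom_barb; eauto. }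
  destruct (PM_split _ _ _ H4) as [lo' [l' [HP [HF HPr]]]].
  cbn [map] in HP. change (ren p (Amb m Zero)) with (Amb (p m) Zero) in HP.
  change (ren p (Act (Open_ m) (parlist (at_ ID t1 TB)))) with
    (Act (Open_ (p m)) (ren p (parlist (at_ ID t1 TB)))) in HP.
  rewrite pm in HP.
  destruct (classic (In (Amb m Zero) l')) as [Hl'|Hl'].
  { exfalso. destruct (PM_in_l _ _ _ HPr Hl') as [e [He1 He2]]. apply aeq_Amb_l in He2.
    destruct He2 as [B' [-> _]]. apply (BarbY B'). apply in_or_app; auto. }
  assert (HmA : In (Amb m Zero) lo').
  { assert (In (Amb m Zero) (lo' ++ l')) by (eapply Permutation_in; [eauto|]; simpl; auto).
    apply in_app_or in H; tauto. }
  destruct (F2_in_l _ _ _ HF HmA) as [w [Hw1 Hw2]].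
  destruct H7 as [K|[K|[K|K]]].
  - exfalso. destruct K as [a [B [B' [-> ->]]]]. destruct Hw1 as [<-|[]].
    destruct Hw2 as [<- _]. apply (BarbY B'). simpl; auto.
  - exfalso. destruct K as [a [b [B1 [l [B2 [B3 [-> ->]]]]]]]. destruct Hw1 as [<-|[<-|[]]].
    + destruct Hw2 as [_ Hw2]. apply (Zero_not_act _ _ _ Hw2).
    + destruct Hw2 as [<- _]. apply (BarbY B3). simpl; auto.
  - exfalso. destruct K as [b [a [B [l ->]]]]. destruct Hw1 as [<-|[]].
    destruct Hw2 as [_ Hw2]. apply (Zero_not_amb _ _ _ Hw2).
  - destruct K as [c [l1 [l2 [-> ->]]]].
    destruct Hw1 as [<-|[<-|[]]]; [simpl in Hw2; discriminate|].
    destruct Hw2 as [<- Hl2].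
    inversion HF as [|x2 lo1 y1 lo2 Hx2 HF2]; subst. inversion HF2 as [|y2 lo3 y3 lo4 Hy2 HF3]; subst.
    inversion HF3; subst.
    destruct HmA as [Ex|[Ex|[]]].
    { exfalso. subst x2. simpl in Hx2. discriminate. }
    subst y2.
    assert (Hx2in : In x2 (Amb m Zero :: Act (Open_ m) (ren p (parlist (at_ ID t1 TB))) :: map (ren p) (at_ ID t2 Z))).
    { apply (Permutation_in _ (Permutation_sym HP)). simpl; auto. }
    destruct Hx2in as [Ex|[Ex|Ex]].
    { exfalso. subst x2. simpl in Hx2. discriminate. }
    2:{ exfalso. apply in_map_iff in Ex. destruct Ex as [e [<- He]].
        apply aeq_Act_r in Hx2. destruct Hx2 as [B' [E' _]]. apply (FmR e He). rewrite E'. simpl; auto. }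
    subst x2. simpl in Hx2. destruct Hx2 as [_ Hl1].
    assert (HP2 : Permutation (map (ren p) (at_ ID t2 Z)) l').
    { apply Permutation_cons_inv with (a := Amb m Zero).
      apply Permutation_cons_inv with (a := Act (Open_ m) (ren p (parlist (at_ ID t1 TB)))).
      eapply Permutation_trans; [apply perm_swap|]. exact HP. }
    etransitivity; [apply (real Y s HsY)|].
    rewrite (cnt_red _ _ Hr), cnt_nus, length_seq, cW0, Nat.add_0_r.
    assert (H3' : forall x, x < s \/ s + k <= x -> p x = x)
      by (intros x Hx; apply H3; rewrite cnt_nus, length_seq, cW0; lia).
    symmetry. rewrite (real0 TB t1 cTB), (real0 Z t2 cZ). rewrite (alpha_block _ s p p' H1 H2 H3').
    symmetry. apply nus_cong.
    rewrite (PM_parlist _ _ H5), parlist_app, parlist_app.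
    rewrite <- Hl1, <- Hl2, <- (PM_parlist _ _ HPr), <- (parlist_perm _ _ HP2).
    rewrite <- ren_parlist. reflexivity.
Qed.

Lemma forward n T1 X Y : Popen n T1 X Y -> trans_coopen n T1 X Y.
Proof.
  intros [P'' [m [Hm [Hb [Hr1 [Hr2 HbY]]]]]].
  set (s := S (list_max (fn (Cprime n m T1 X)))).
  assert (Hs : forall x, In x (fn (Cprime n m T1 X)) -> x < s) by apply lt_max_fn.
  destruct (fnU_facts _ _ _ _ _ Hs) as [hn [hm [hX hT]]].
  destruct (step1 _ _ _ _ _ _ Hm Hs Hb Hr1) as [B2x [l'' [HPX HP'']]].
  assert (Hr2' : red (nus (seq s (cnt X + cnt T1))
      (Par (Par (Amb m Zero) (Par (Act (Open_ m) (parlist (at_ ID (s + cnt X) T1))) Zero))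
           (Par B2x (parlist l'')))) Y).
  { eapply r_struct; [symmetry; exact HP''|exact Hr2|reflexivity]. }
  assert (HY := step2 _ _ _ _ _ _ _ _ HPX Hs Hm Hr2' HbY).
  assert (AX : forall x, In x (fn (Par B2x (parlist l''))) -> x < s + cnt X).
  { intros x Hx. assert (Hx2 : In x (fn (parlist (at_ ID s X)))).
    { apply (fn_scong _ _ (parlist_perm _ _ (Permutation_sym HPX))). simpl in *.
      rewrite in_app_iff in *. tauto. }
    apply at_fn in Hx2. destruct Hx2 as [[y [H1 H2]]|H1]; [|lia].
    unfold ID in H2; subst. specialize (hX y H1). lia. }
  exists (seq s (cnt X)), B2x, (parlist l''). split; [|split; [|split]].
  - etransitivity; [apply (real X s hX)|]. apply nus_cong.
    apply (parlist_perm _ _ HPX).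
  - rewrite in_seq. lia.
  - intros a Ha Ha'. apply in_seq in Ha. specialize (hT a Ha'). lia.
  - rewrite HY. rewrite seq_app, nus_app. apply nus_cong.
    rewrite nus_par_r.
    + rewrite par_zero. rewrite <- (real T1 (s + cnt X)) by (intros x Hx; specialize (hT x Hx); lia).
      rewrite (par_comm B2x T1), par_assoc. reflexivity.
    + intros a Ha Ha'. apply in_seq in Ha. apply AX in Ha'. lia.
Qed.

Lemma backward n T1 P P' A P1 P2 m :
  scong P (nus A (Par (Amb n P1) P2)) -> ~ In n A -> (forall a, In a A -> ~ In a (fn T1)) ->
  scong P' (nus A (Par (Par P1 T1) P2)) -> ~ In m A -> m <> n -> ~ In m (fn T1) ->
  ~ In m (fn P1) -> ~ In m (fn P2) ->
  exists P'', barb P'' m /\ red (Cprime n m T1 P) P'' /\ red P'' P' /\ ~ barb P' m.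
Proof.
  intros H1 H2 H3 H4 H5 H6 H7 H8 H9.
  set (Qc := Par (Amb m Zero) (Act (Open_ m) T1)).
  exists (nus A (Par (Par Qc P1) P2)). split; [|split; [|split]].
  - exists A, Zero, (Par (Act (Open_ m) T1) (Par P1 P2)). split; auto.
    apply nus_cong. unfold Qc. rewrite !par_assoc. reflexivity.
  - apply r_struct with (P0 := nus A (Par (Par (Act (Open_ n) Qc) (Amb n P1)) P2))
                         (Q0 := nus A (Par (Par Qc P1) P2)).
    + unfold Cprime. rewrite H1. rewrite <- nus_par_r.
      * apply nus_cong. rewrite (par_comm (Par (Amb n P1) P2)), <- par_assoc. reflexivity.
      * intros a Ha Ha'. simpl in Ha'. destruct Ha' as [->|Ha']; [auto|].
        destruct Ha' as [->|[->|Ha']]; auto. apply (H3 a); auto.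
    + apply red_nus. apply r_par. apply r_open.
    + reflexivity.
  - apply r_struct with (P0 := nus A (Par (Par (Act (Open_ m) T1) (Amb m Zero)) (Par P1 P2)))
                         (Q0 := nus A (Par (Par T1 Zero) (Par P1 P2))).
    + apply nus_cong. unfold Qc. rewrite par_assoc. rewrite (par_comm (Amb m Zero) (Act (Open_ m) T1)).
      reflexivity.
    + apply red_nus. apply r_par. apply r_open.
    + rewrite H4. apply nus_cong. rewrite par_zero. rewrite (par_comm P1 T1), par_assoc. reflexivity.
  - intros Hb. apply barb_fn in Hb. apply (fn_scong _ _ H4) in Hb. apply fn_nus in Hb.
    destruct Hb as [Hb _]. simpl in Hb. rewrite !in_app_iff in Hb. tauto.
Qed.

Lemma fresh_avoid (l : list nat) : exists m, ~ In m l.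
Proof. apply fresh_name. Qed.

Lemma coopen_popen n T1 P P' L : trans_coopen n T1 P P' ->
  exists m, ~ In m L /\ ~ In m (fn P) /\
    exists P'', barb P'' m /\ red (Cprime n m T1 P) P'' /\ red P'' P' /\ ~ barb P' m.
Proof.
  intros [A [P1 [P2 [H1 [H2 [H3 H4]]]]]].
  destruct (fresh_avoid (L ++ fn P ++ A ++ fn T1 ++ fn P1 ++ fn P2 ++ [n])) as [m Hm].
  rewrite !in_app_iff in Hm. simpl in Hm.
  exists m. split; [tauto|split; [tauto|]].
  apply (backward n T1 P P' A P1 P2 m); auto; try tauto.
  intros ->. tauto.
Qed.

Theorem mainTheorem4 (n : name) (T1 : proc) :
  stable (Popen n T1) bisimBS /\
  (forall P P' : proc, Popen n T1 P P' <-> trans_coopen n T1 P P').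
Proof.
  split.
  - intros P Q P' [R [Rsym [Rprog HR]]] Hpo.
    apply forward in Hpo.
    destruct (coopen_popen _ _ _ _ (fn Q) Hpo) as [m [HmQ [HmP [P'' [Hb [Hr1 [Hr2 HbP]]]]]]].
    destruct (proj2 (Rprog P Q HR (CParL Hole (Act (Open_ n) (Par (Amb m Zero) (Act (Open_ m) T1))))) P'' Hr1)
      as [Q'' [HrQ HRQ]].
    destruct (proj2 (Rprog P'' Q'' HRQ Hole) P' Hr2) as [Q' [HrQ' HRQ']].
    exists Q'. split.
    + exists Q'', m. split; [auto|split; [|split; [exact HrQ|split; [exact HrQ'|]]]].
      * apply (proj1 (Rprog P'' Q'' HRQ Hole)). exact Hb.
      * intros HbQ. apply HbP. apply (proj1 (Rprog Q' P' (Rsym _ _ HRQ') Hole)). exact HbQ.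
    + exists R. auto.
  - intros P P'. split.
    + apply forward.
    + intros H. destruct (coopen_popen _ _ _ _ [] H) as [m [_ [HmP [P'' [H1 [H2 [H3 H4]]]]]]].
      exists P'', m. auto.
Qed.
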